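(* Let $k\ge 3$ be an integer, let $$P_k(x)=-\left(x+\tfrac{k-1}{2}\right)\left(x-\tfrac{k-1}{2}\right)\prod_{i=1}^{k-1}\left(x-\left(i-\tfrac k2\right)\right)^2,$$ and let $Z_k=(X_k,Y_k)$ be the planar piecewise smooth vector field with $X_k(x,y)=(1,P_k'(x))$ for $y\ge0$ and $Y_k(x,y)=(-1,P_k'(x))$ for $y\le0$. Let $\Lambda_k=\{(x,P_k(x)):r_0\le x\le r_1\}\cup\{(x,-P_k(x)):r_0\le x\le r_1\}$ with $r_0=\frac{1-k}{2}$, $r_1=\frac{k-1}{2}$. Then $\Lambda_k$ is a compact set invariant under $Z_k$, and the time-one map $\overline{T_1}$ of $Z_k$ restricted to $\Lambda_k$ (on the metric space $(\overline{\Omega}_k,\rho_k)$ defined below) is topologically conjugate to a subshift on $2(k-1)$ symbols: there exist a subshift $K\subset\{0,1,\dots,2k-3\}^{\mathbb{Z}}$ and a homeomorphism $h:\overline{\Omega}_k\to K$ with $h\circ\overline{T_1}=\sigma|_K\circ h$.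
   Context: Switching manifold $\Sigma=\{(x,y):y=0\}=f^{-1}(0)$ with $f(x,y)=y$, $\Sigma^+=\{y\ge0\}$, $\Sigma^-=\{y\le0\}$. A planar piecewise smooth vector field (PSVF) $Z=(X,Y)$ equals the smooth field $X$ on $\Sigma^+$ and the smooth field $Y$ on $\Sigma^-$. Write $Wf(p)=\langle\nabla f(p),W(p)\rangle$, $W^2f(p)=\langle\nabla(Wf)(p),W(p)\rangle$. Regions of $\Sigma$: crossing $\Sigma^c=\{Xf\cdot Yf>0\}$, split into $\Sigma^{c+}$ ($Xf,Yf>0$) and $\Sigma^{c-}$ ($Xf,Yf<0$); sliding $\Sigma^s=\{Xf<0<Yf\}$; escaping $\Sigma^e=\{Yf<0<Xf\}$. A point $p\in\Sigma$ with $Xf(p)=0$ is a tangential singularity of $X$; a fold of $X$ if $X^2f(p)\neq0$, visible if $X^2f(p)>0$, invisible if $X^2f(p)<0$; for $Y$ a fold is visible if the $Y$-orbit of $p$ lies locally in $\Sigma^-$ ($Y^2f(p)<0$), invisible otherwise. A two-fold is a fold of both fields. A tangential singularity is singular if it is an invisible tangency of both $X$ and $Y$, regular otherwise. On $\overline{\Sigma^s\cup\Sigma^e}$ the sliding field is $Z^T=(Yf\,X-Xf\,Y)/(Yf-Xf)$. Local trajectories (Filippov convention): off $\Sigma$ follow $X$ (if $y>0$) or $Y$ (if $y<0$); through $p\in\Sigma^{c+}$ follow $Y$ for $t\le0$ and $X$ for $t\ge0$ (time-reversed for $\Sigma^{c-}$); through $p\in\Sigma^e$ follow $Z^T$ for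 $t\le0$ and one of $X,Y,Z^T$ for $t\ge0$ (time-reversed for $\Sigma^s$); through a regular tangential singularity follow one of the flows of $X,Y,Z^T$ for $t\le0$ and one of them for $t\ge0$; a singular tangential singularity is stationary. A global trajectory is a map $\gamma:\mathbb{R}\to\mathbb{R}^2$ obtained by concatenating orientation-preserving local trajectories $\sigma_i$ on $[t_i,t_{i+1}]$, $i\in\mathbb{Z}$, with $\sigma_i(t_{i+1})=\sigma_{i+1}(t_{i+1})$ and $t_i\to\pm\infty$ as $i\to\pm\infty$. A set $\Lambda$ is invariant for $Z$ if every global trajectory $\gamma$ with $\gamma(0)\in\Lambda$ satisfies $\gamma(\mathbb{R})\subset\Lambda$. Construction: $p_j=j-\frac k2$ for $j=1,\dots,k-1$. $\Omega_k$ is the set of global trajectories $\gamma$ of $Z_k$ with $\gamma(0)\in\Lambda_k$; $T_1:\Omega_k\to\Omega_k$, $T_1(\gamma)(t)=\gamma(t+1)$. Arcs: $I_0=\{(x,\pm P_k(x)): r_0\le x<p_1\}$; for $j=1,\dots,k-2$, $I_{2j-1}=\{(x,P_k(x)):p_j<x<p_{j+1}\}$ and $I_{2j}=\{(x,-P_k(x)):p_j<x<p_{j+1}\}$; $I_{2k-3}=\{(x,\pm P_k(x)):p_{k-1}<x\le r_1\}$. Itinerary $s:\Omega_k\to\{0,\dots,2k-3\}^{\mathbb{Z}}$: $s(\gamma)_j=n$ if $\gamma(j)\in I_n$, and $s(\gamma)_j=m$ if $\gamma(j)=(p_l,0)$ for some $l$ and $\gamma(j+\frac12)\in I_m$. Set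 $\gamma_1\sim\gamma_2$ iff $s(\gamma_1)=s(\gamma_2)$, $\overline{\Omega}_k=\Omega_k/\sim$. Each class $\overline\gamma$ has a representative $\gamma^*$ with $\gamma^*(0)\in\{(p_l,0):l=1,\dots,k-1\}$; $\rho_k(\overline{\gamma}_1,\overline{\gamma}_2)=\sum_{i\in\mathbb{Z}}2^{-|i|}d_H(\gamma_1^*([i,i+1]),\gamma_2^*([i,i+1]))$ with $d_H$ the Hausdorff distance (Euclidean metric) and $\gamma_i^*$ such representatives. $\overline{T_1}(\overline\gamma)=\overline{T_1(\gamma)}$ (well defined). On $\{0,\dots,2k-3\}^{\mathbb{Z}}$ use the metric $d(x,y)=\sum_{j\in\mathbb{Z}}|x_j-y_j|/2^{|j|}$ (inducing the product of discrete topologies) and the shift $\sigma((a_j)_j)=(a_{j+1})_j$. A subshift is a closed subset $K$ with $\sigma(K)\subset K$ (invariant). *)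

(* Defs.v *)
From Stdlib Require Import Reals Lra Lia ZArith List ClassicalEpsilon.
From Coquelicot Require Import Coquelicot.
Open Scope R_scope.

Definition pt := (R * R)%type.

Definition edist (p q : pt) : R :=
  sqrt ((fst p - fst q) ^ 2 + (snd p - snd q) ^ 2).

Definition open2 (U : pt -> Prop) : Prop :=
  forall p, U p -> exists e, 0 < e /\ forall q, edist p q < e -> U q.

Definition compact2 (K : pt -> Prop) : Prop :=
  forall (I : Type) (U : I -> pt -> Prop),
    (forall i, open2 (U i)) ->
    (forall p, K p -> exists i, U i p) ->
    exists l : list I, forall p, K p -> exists i, In i l /\ U i p.

Definition field := pt -> pt.

(* W f (p) = < grad f (p), W(p) >, with grad f = (0,1) *)
Definition Wf (W : field) (p : pt) : R := 0 * fst (W p) + 1 * snd (W p).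

Definition W2f (W : field) (p : pt) : R :=
  Derive (fun x => Wf W (x, snd p)) (fst p) * fst (W p)
  + Derive (fun y => Wf W (fst p, y)) (snd p) * snd (W p).

Definition Sigma (p : pt) : Prop := snd p = 0.
Definition SigmaPlus (p : pt) : Prop := snd p >= 0.
Definition SigmaMinus (p : pt) : Prop := snd p <= 0.

Definition crossing_plus (X Y : field) (p : pt) : Prop :=
  Sigma p /\ Wf X p > 0 /\ Wf Y p > 0.
Definition crossing_minus (X Y : field) (p : pt) : Prop :=
  Sigma p /\ Wf X p < 0 /\ Wf Y p < 0.
Definition sliding (X Y : field) (p : pt) : Prop :=
  Sigma p /\ Wf X p < 0 /\ 0 < Wf Y p.
Definition escaping (X Y : field) (p : pt) : Prop :=
  Sigma p /\ Wf Y p < 0 /\ 0 < Wf X p.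

Definition slide_esc_closure (X Y : field) (p : pt) : Prop :=
  forall e, 0 < e -> exists q, (sliding X Y q \/ escaping X Y q) /\ edist p q < e.

Definition tangency (X Y : field) (p : pt) : Prop :=
  Sigma p /\ (Wf X p = 0 \/ Wf Y p = 0).
Definition invisible_X (X : field) (p : pt) : Prop :=
  Sigma p /\ Wf X p = 0 /\ W2f X p < 0.
Definition invisible_Y (Y : field) (p : pt) : Prop :=
  Sigma p /\ Wf Y p = 0 /\ W2f Y p > 0.
Definition singular_tangency (X Y : field) (p : pt) : Prop :=
  invisible_X X p /\ invisible_Y Y p.
Definition regular_tangency (X Y : field) (p : pt) : Prop :=
  tangency X Y p /\ ~ singular_tangency X Y p.

Definition ZT (X Y : field) : field := fun p =>
  ((Wf Y p * fst (X p) - Wf X p * fst (Y p)) / (Wf Y p - Wf X p),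
   (Wf Y p * snd (X p) - Wf X p * snd (Y p)) / (Wf Y p - Wf X p)).

Definition int_curve (W : field) (a b : R) (phi : R -> pt) : Prop :=
  a <= b /\
  continuous_on (fun t => a <= t <= b) phi /\
  (forall t, a < t < b -> is_derive phi t (W (phi t))).

Definition followX (X Y : field) (a b : R) (phi : R -> pt) : Prop :=
  int_curve X a b phi /\ forall t, a <= t <= b -> SigmaPlus (phi t).
Definition followY (X Y : field) (a b : R) (phi : R -> pt) : Prop :=
  int_curve Y a b phi /\ forall t, a <= t <= b -> SigmaMinus (phi t).
Definition followZT (X Y : field) (a b : R) (phi : R -> pt) : Prop :=
  int_curve (ZT X Y) a b phi /\
  forall t, a <= t <= b -> slide_esc_closure X Y (phi t).
Definition followAny (X Y : field) (a b : R) (phi : R -> pt) : Prop :=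
  followX X Y a b phi \/ followY X Y a b phi \/ followZT X Y a b phi.

(* local trajectory phi through p, defined on [a,b] with a <= 0 <= b,
   phi 0 = p (Filippov convention) *)
Definition local_traj (X Y : field) (p : pt) (a b : R) (phi : R -> pt) : Prop :=
  a <= 0 <= b /\ phi 0 = p /\
  ( (snd p > 0 /\ followX X Y a b phi)
  \/ (snd p < 0 /\ followY X Y a b phi)
  \/ (crossing_plus X Y p /\ followY X Y a 0 phi /\ followX X Y 0 b phi)
  \/ (crossing_minus X Y p /\ followX X Y a 0 phi /\ followY X Y 0 b phi)
  \/ (escaping X Y p /\ followZT X Y a 0 phi /\ followAny X Y 0 b phi)
  \/ (sliding X Y p /\ followAny X Y a 0 phi /\ followZT X Y 0 b phi)
  \/ (regular_tangency X Y p /\ followAny X Y a 0 phi /\ followAny X Y 0 b phi)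
  \/ (singular_tangency X Y p /\ forall t, a <= t <= b -> phi t = p)).

Definition global_traj (X Y : field) (gamma : R -> pt) : Prop :=
  exists tt : Z -> R,
    (forall i, tt i < tt (i + 1)%Z) /\
    (forall M, exists N, forall i, (N <= i)%Z -> M < tt i) /\
    (forall M, exists N, forall i, (i <= N)%Z -> tt i < M) /\
    (forall i, exists (p : pt) (s a b : R) (phi : R -> pt),
        local_traj X Y p a b phi /\
        a <= tt i - s /\ tt (i + 1)%Z - s <= b /\
        forall t, tt i <= t <= tt (i + 1)%Z -> gamma t = phi (t - s)).

Definition invariant (X Y : field) (L : pt -> Prop) : Prop :=
  forall gamma, global_traj X Y gamma -> L (gamma 0) ->
    forall t, L (gamma t).

Fixpoint prodf (n : nat) (f : nat -> R) : R :=
  match n with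
  | O => 1
  | S m => prodf m f * f (S m)
  end.

Definition Pk (k : nat) (x : R) : R :=
  - (x + (INR k - 1) / 2) * (x - (INR k - 1) / 2)
  * prodf (k - 1) (fun i => (x - (INR i - INR k / 2)) ^ 2).

Definition Xk (k : nat) : field := fun p => (1, Derive (Pk k) (fst p)).
Definition Yk (k : nat) : field := fun p => (-1, Derive (Pk k) (fst p)).

Definition r0 (k : nat) : R := (1 - INR k) / 2.
Definition r1 (k : nat) : R := (INR k - 1) / 2.
Definition pj (k j : nat) : R := INR j - INR k / 2.

Definition Lambda (k : nat) (q : pt) : Prop :=
  r0 k <= fst q <= r1 k /\ (snd q = Pk k (fst q) \/ snd q = - Pk k (fst q)).

Definition InArc (k n : nat) (q : pt) : Prop :=
  (n = 0%nat /\ r0 k <= fst q < pj k 1 /\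
     (snd q = Pk k (fst q) \/ snd q = - Pk k (fst q)))
  \/ (exists j, (1 <= j <= k - 2)%nat /\ n = (2 * j - 1)%nat /\
        pj k j < fst q < pj k (S j) /\ snd q = Pk k (fst q))
  \/ (exists j, (1 <= j <= k - 2)%nat /\ n = (2 * j)%nat /\
        pj k j < fst q < pj k (S j) /\ snd q = - Pk k (fst q))
  \/ (n = (2 * k - 3)%nat /\ pj k (k - 1) < fst q <= r1 k /\
        (snd q = Pk k (fst q) \/ snd q = - Pk k (fst q))).

Definition IsTangPt (k : nat) (q : pt) : Prop :=
  exists l, (1 <= l <= k - 1)%nat /\ q = (pj k l, 0).

Definition Omega (k : nat) (gamma : R -> pt) : Prop :=
  global_traj (Xk k) (Yk k) gamma /\ Lambda k (gamma 0).

Definition T1 (gamma : R -> pt) : R -> pt := fun t => gamma (t + 1).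

Definition itin_at (k : nat) (gamma : R -> pt) (j : Z) (n : nat) : Prop :=
  InArc k n (gamma (IZR j))
  \/ (IsTangPt k (gamma (IZR j)) /\ InArc k n (gamma (IZR j + / 2))).

Definition itin (k : nat) (gamma : R -> pt) : Z -> nat :=
  fun j => epsilon (inhabits 0%nat) (fun n => itin_at k gamma j n).

Definition equiv_traj (k : nat) (g1 g2 : R -> pt) : Prop :=
  itin k g1 = itin k g2.

(* chosen representative gamma* of the class of gamma, with gamma*(0) a
   tangency point (gamma itself if no such representative exists) *)
Definition rep (k : nat) (gamma : R -> pt) : R -> pt :=
  epsilon (inhabits gamma)
    (fun g => Omega k g /\ equiv_traj k g gamma /\ IsTangPt k (g 0)).

Definition sumZ (u : Z -> R) : R :=
  Series (fun n => u (Z.of_nat n)) + Series (fun n => u (- Z.of_nat (S n))%Z).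

Definition dist_pt_set (p : pt) (B : pt -> Prop) : R :=
  real (Glb_Rbar (fun r => exists b, B b /\ r = edist p b)).
Definition hausdorff (A B : pt -> Prop) : R :=
  Rmax (real (Lub_Rbar (fun r => exists a, A a /\ r = dist_pt_set a B)))
       (real (Lub_Rbar (fun r => exists b, B b /\ r = dist_pt_set b A))).

Definition image_on (gamma : R -> pt) (a b : R) (q : pt) : Prop :=
  exists t, a <= t <= b /\ q = gamma t.

Definition rho (k : nat) (g1 g2 : R -> pt) : R :=
  sumZ (fun i => (/ 2) ^ Z.abs_nat i *
     hausdorff (image_on (rep k g1) (IZR i) (IZR i + 1))
               (image_on (rep k g2) (IZR i) (IZR i + 1))).

Definition symseq (k : nat) (a : Z -> nat) : Prop :=
  forall j, (a j <= 2 * k - 3)%nat.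

Definition dshift (a b : Z -> nat) : R :=
  sumZ (fun j => Rabs (INR (a j) - INR (b j)) / 2 ^ Z.abs_nat j).

Definition sigma_shift (a : Z -> nat) : Z -> nat := fun j => a (j + 1)%Z.

Definition subshift (k : nat) (K : (Z -> nat) -> Prop) : Prop :=
  (forall a, K a -> symseq k a) /\
  (forall a, symseq k a ->
     (forall e, 0 < e -> exists b, K b /\ dshift a b < e) -> K a) /\
  (forall a, K a -> K (sigma_shift a)).

(* Main.v *)
Require Import Defs.
From Stdlib Require Import Reals ZArith.
From Coquelicot Require Import Coquelicot.
From Stdlib Require Import Lra Lia List Zeven Classical ClassicalEpsilon PropExtensionality FunctionalExtensionality.
Open Scope R_scope.

Lemma is_derive_fst (phi : R -> pt) t (l : pt) :
  is_derive phi t l -> is_derive (fun u => fst (phi u)) t (fst l).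
Proof.
  intro H. unfold is_derive in *.
  eapply filterdiff_ext_lin.
  - apply (filterdiff_comp' phi (fun p : prod_NormedModule R_AbsRing R_NormedModule R_NormedModule => fst p) t _ (fun p : prod_NormedModule R_AbsRing R_NormedModule R_NormedModule => fst p) H).
    apply filterdiff_linear, is_linear_fst.
  - intros y. simpl. reflexivity.
Qed.

Lemma is_derive_snd (phi : R -> pt) t (l : pt) :
  is_derive phi t l -> is_derive (fun u => snd (phi u)) t (snd l).
Proof.
  intro H. unfold is_derive in *.
  eapply filterdiff_ext_lin.
  - apply (filterdiff_comp' phi (fun p : prod_NormedModule R_AbsRing R_NormedModule R_NormedModule => snd p) t _ (fun p : prod_NormedModule R_AbsRing R_NormedModule R_NormedModule => snd p) H).
    apply filterdiff_linear, is_linear_snd.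
  - intros y. simpl. reflexivity.
Qed.

Lemma is_derive_pair' (f g : R -> R) t a b :
  is_derive f t a -> is_derive g t b -> is_derive (fun u => (f u, g u) : pt) t (a, b).
Proof.
  intros Hf Hg. unfold is_derive in *.
  eapply filterdiff_ext_lin.
  - apply (filterdiff_comp'_2 f g (fun x y => (x, y) : prod_NormedModule R_AbsRing R_NormedModule R_NormedModule) t _ _ (fun x y => (x,y)) Hf Hg).
    apply filterdiff_linear.
    apply is_linear_ext with (l1 := fun x => x). intros [x y]; reflexivity.
    apply is_linear_id.
  - intros y. simpl. reflexivity.
Qed.

Inductive sm : (R -> R) -> Prop :=
| sm_const c : sm (fun _ => c)
| sm_id : sm (fun x => x)
| sm_plus f g : sm f -> sm g -> sm (fun x => f x + g x)
| sm_mult f g : sm f -> sm g -> sm (fun x => f x * g x)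
| sm_ext f g : sm f -> (forall x, f x = g x) -> sm g.

Lemma sm_deriv f : sm f -> (forall x, ex_derive f x) /\ sm (Derive f).
Proof.
  induction 1 as [c| |f g _ [Hf Sf] _ [Hg Sg]|f g F1 [Hf Sf] G1 [Hg Sg]|f g _ [Hf Sf] E].
  - split. intros; apply ex_derive_const.
    apply sm_ext with (fun _ => 0). constructor. intros; rewrite Derive_const; auto.
  - split. intros; apply ex_derive_id.
    apply sm_ext with (fun _ => 1). constructor. intros; rewrite Derive_id; auto.
  - split. intros x; exact (ex_derive_plus f g x (Hf x) (Hg x)).
    apply sm_ext with (fun x => Derive f x + Derive g x). constructor; auto.
    intros x; symmetry; apply (Derive_plus f g x); auto.
  - split. intros x; exact (ex_derive_mult f g x (Hf x) (Hg x)).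
    apply sm_ext with (fun x => Derive f x * g x + f x * Derive g x).
    constructor; constructor; auto.
    intros x; symmetry; apply (Derive_mult f g x); auto.
  - assert (Ef : f = g) by (apply FunctionalExtensionality.functional_extensionality; auto).
    subst; auto.
Qed.

Lemma sm_prodf n (c : nat -> R) : sm (fun x => prodf n (fun i => (x - c i) ^ 2)).
Proof.
  induction n; simpl.
  - constructor.
  - constructor; auto.
    apply sm_ext with (fun x => (x + (- c (S n))) * ((x + (- c (S n))) * 1)).
    constructor; constructor; constructor; constructor.
    intros; ring.
Qed.

Lemma sm_Pk k : sm (Pk k).
Proof.
  unfold Pk.
  apply sm_ext with (fun x => ((-1) * (x + (INR k - 1) / 2)) * (x + - ((INR k - 1) / 2))
     * prodf (k - 1) (fun i => (x - (INR i - INR k / 2)) ^ 2)).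
  - constructor. constructor. constructor. constructor. constructor; constructor.
    constructor; constructor. apply (sm_prodf (k-1) (fun i => INR i - INR k / 2)).
  - intros; ring.
Qed.

Lemma Pk_ex_derive k x : ex_derive (Pk k) x.
Proof. apply (proj1 (sm_deriv _ (sm_Pk k))). Qed.
Lemma Pk'_ex_derive k x : ex_derive (Derive (Pk k)) x.
Proof. apply (proj1 (sm_deriv _ (proj2 (sm_deriv _ (sm_Pk k))))). Qed.
Lemma Pk_cont k x : continuity_pt (Pk k) x.
Proof. pose proof (ex_derive_continuous _ _ (Pk_ex_derive k x)) as H.
  apply continuity_pt_filterlim. exact H. Qed.

Lemma prodf_nonneg n f : (forall i, (1 <= i <= n)%nat -> 0 <= f i) -> 0 <= prodf n f.
Proof.
  induction n; simpl; intros H. lra.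
  apply Rmult_le_pos. apply IHn; intros; apply H; lia. apply H; lia.
Qed.
Lemma prodf_pos n f : (forall i, (1 <= i <= n)%nat -> 0 < f i) -> 0 < prodf n f.
Proof.
  induction n; simpl; intros H. lra.
  apply Rmult_lt_0_compat. apply IHn; intros; apply H; lia. apply H; lia.
Qed.
Lemma prodf_zero n f i : (1 <= i <= n)%nat -> f i = 0 -> prodf n f = 0.
Proof.
  induction n; simpl; intros H E. lia.
  destruct (Nat.eq_dec i (S n)) as [->|ne]. rewrite E; ring.
  rewrite IHn; [ring|lia|auto].
Qed.
Lemma prodf_zero_inv n f : prodf n f = 0 -> exists i, (1 <= i <= n)%nat /\ f i = 0.
Proof.
  induction n; simpl; intros H. lra.
  apply Rmult_integral in H as [H|H].
  destruct (IHn H) as [i [? ?]]; exists i; split; auto; lia.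
  exists (S n); split; auto; lia.
Qed.

Definition Qk k x := prodf (k - 1) (fun i => (x - pj k i) ^ 2).

Lemma Pk_eq k x : Pk k x = (r1 k ^ 2 - x ^ 2) * Qk k x.
Proof. unfold Pk, Qk, r1, pj. ring. Qed.

Lemma Qk_nonneg k x : 0 <= Qk k x.
Proof. apply prodf_nonneg; intros; apply pow2_ge_0. Qed.

Lemma Qk_pos k x : (forall i, (1 <= i <= k - 1)%nat -> x <> pj k i) -> 0 < Qk k x.
Proof.
  intros H; apply prodf_pos; intros i Hi.
  specialize (H i Hi). assert (x - pj k i <> 0) by lra.
  apply pow2_gt_0; auto.
Qed.

Lemma Qk_zero k l : (1 <= l <= k - 1)%nat -> Qk k (pj k l) = 0.
Proof. intros H; apply prodf_zero with l; auto. ring. Qed.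

Lemma r0_eq k : r0 k = - r1 k.
Proof. unfold r0, r1; field. Qed.

Lemma INR_ge3 k : (3 <= k)%nat -> 3 <= INR k.
Proof. intros; apply (le_INR 3 k) in H; simpl in H; lra. Qed.

Lemma r1_ge1 k : (3 <= k)%nat -> 1 <= r1 k.
Proof. intros H; apply INR_ge3 in H; unfold r1; lra. Qed.

Lemma pj_S k i : pj k (S i) = pj k i + 1.
Proof. unfold pj; rewrite S_INR; ring. Qed.
Lemma pj_1 k : pj k 1 = r0 k + /2.
Proof. unfold pj, r0; simpl; field. Qed.
Lemma pj_km1 k : (1 <= k)%nat -> pj k (k - 1) = r1 k - /2.
Proof. intros H; unfold pj, r1; rewrite minus_INR by lia; simpl; field. Qed.

Lemma pj_bounds k i : (1 <= i <= k - 1)%nat -> r0 k + /2 <= pj k i <= r1 k - /2.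
Proof.
  intros [H1 H2]. assert (1 <= k)%nat by lia. apply le_INR in H1. apply le_INR in H2.
  rewrite minus_INR in H2 by lia. simpl in *.
  unfold pj, r0, r1; split; lra.
Qed.

Lemma pj_lt k i j : (i < j)%nat -> pj k i + 1 <= pj k j.
Proof.
  intros H. unfold pj.
  assert (INR (S i) <= INR j) by (apply le_INR; lia). rewrite S_INR in H0. lra.
Qed.

Lemma pj_inj k i j : pj k i = pj k j -> i = j.
Proof. unfold pj; intros H. apply INR_eq. lra. Qed.

Lemma between_not_pj k l x : pj k l < x < pj k (S l) -> forall i, x <> pj k i.
Proof.
  intros [H1 H2] i E; subst x.
  destruct (Nat.lt_ge_cases l i).
  - destruct (Nat.lt_ge_cases (S l) i).
    + apply (pj_lt k) in H0. lra.
    + assert (i = S l) by lia. subst; lra.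
  - destruct (Nat.eq_dec l i). subst; lra.
    assert (i < l)%nat by lia. apply (pj_lt k) in H0. lra.
Qed.

Lemma below_not_pj k x : x < pj k 1 -> forall i, (1 <= i)%nat -> x <> pj k i.
Proof.
  intros H i Hi E; subst. destruct (Nat.eq_dec i 1). subst; lra.
  assert (1 < i)%nat by lia. apply (pj_lt k) in H0. lra.
Qed.

Lemma above_not_pj k x : (1 <= k)%nat -> pj k (k - 1) < x -> forall i, (i <= k - 1)%nat -> x <> pj k i.
Proof.
  intros Hk H i Hi E; subst. destruct (Nat.eq_dec i (k - 1)). subst; lra.
  assert (i < k - 1)%nat by lia. apply (pj_lt k) in H0. lra.
Qed.

Lemma Pk_nonneg k x : r0 k <= x <= r1 k -> 0 <= Pk k x.
Proof.
  intros H. rewrite Pk_eq, r0_eq in *. apply Rmult_le_pos; [|apply Qk_nonneg]. nra.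
Qed.

Lemma Pk_neg k x : (3 <= k)%nat -> (x < r0 k \/ r1 k < x) -> Pk k x < 0.
Proof.
  intros hk H. rewrite Pk_eq.
  assert (0 < Qk k x).
  { apply Qk_pos; intros i Hi. pose proof (pj_bounds k i Hi). lra. }
  pose proof (r1_ge1 k hk). rewrite r0_eq in H.
  assert (r1 k ^ 2 - x ^ 2 < 0) by nra. nra.
Qed.

Lemma Pk_pos k x : r0 k < x < r1 k -> (forall i, (1 <= i <= k - 1)%nat -> x <> pj k i) -> 0 < Pk k x.
Proof.
  intros H Hi. rewrite Pk_eq. apply Rmult_lt_0_compat; [|apply Qk_pos; auto].
  rewrite r0_eq in H. nra.
Qed.

Lemma Pk_pj k l : (1 <= l <= k - 1)%nat -> Pk k (pj k l) = 0.
Proof. intros H; rewrite Pk_eq, Qk_zero; auto; ring. Qed.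
Lemma Pk_r1 k : Pk k (r1 k) = 0.
Proof. rewrite Pk_eq; ring. Qed.
Lemma Pk_r0 k : Pk k (r0 k) = 0.
Proof. rewrite Pk_eq, r0_eq; ring. Qed.

Lemma Pk_zero_inv k x : r0 k <= x <= r1 k -> Pk k x = 0 ->
  x = r0 k \/ x = r1 k \/ exists l, (1 <= l <= k - 1)%nat /\ x = pj k l.
Proof.
  intros H E. rewrite Pk_eq in E. apply Rmult_integral in E as [E|E].
  - rewrite r0_eq in *. assert ((r1 k - x) * (r1 k + x) = 0) by (rewrite <- E; ring).
    apply Rmult_integral in H0 as [?|?]; [right; left|left]; lra.
  - apply prodf_zero_inv in E as [i [Hi Ei]]. right; right; exists i; split; auto.
    assert (x - pj k i = 0). { simpl in Ei. nra. } lra.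
Qed.

Lemma Derive_Pk_ends k x : (x = r1 k \/ x = - r1 k) -> Derive (Pk k) x = - 2 * x * Qk k x.
Proof.
  intros Hx.
  assert (Hs : sm (Qk k)) by apply (sm_prodf (k-1) (pj k)).
  destruct (sm_deriv _ Hs) as [HQ _].
  rewrite (Derive_ext (Pk k) (fun x => (r1 k ^ 2 - x ^ 2) * Qk k x)) by apply Pk_eq.
  rewrite Derive_mult; auto.
  - replace (r1 k ^ 2 - x ^ 2) with 0 by (destruct Hx; subst; ring).
    replace (Derive (fun x0 : R => r1 k ^ 2 - x0 ^ 2) x) with (- 2 * x). ring.
    symmetry; apply is_derive_unique.
    auto_derive; auto; ring.
  - auto_derive; auto.
Qed.

Lemma Derive_Pk_r1 k : (3 <= k)%nat -> Derive (Pk k) (r1 k) < 0.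
Proof.
  intros hk. rewrite Derive_Pk_ends by auto.
  assert (0 < Qk k (r1 k)).
  { apply Qk_pos; intros i Hi. pose proof (pj_bounds k i Hi). lra. }
  pose proof (r1_ge1 k hk). nra.
Qed.

Lemma Derive_Pk_r0 k : (3 <= k)%nat -> 0 < Derive (Pk k) (r0 k).
Proof.
  intros hk. rewrite r0_eq. rewrite Derive_Pk_ends by auto.
  assert (0 < Qk k (- r1 k)).
  { apply Qk_pos; intros i Hi. pose proof (pj_bounds k i Hi). rewrite r0_eq in H. lra. }
  pose proof (r1_ge1 k hk). nra.
Qed.

Lemma second_deriv_sign (f : R -> R) x0 d D :
  0 < d -> (forall x, ex_derive f x) -> f x0 = 0 -> Derive f x0 = 0 ->
  (forall x, x0 < x < x0 + d -> 0 <= f x) ->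
  is_derive (Derive f) x0 D -> 0 <= D.
Proof.
  intros Hd Hf E0 D0 Hpos HD.
  destruct (Rle_or_lt 0 D) as [|Hneg]; auto. exfalso.
  apply is_derive_Reals in HD.
  destruct (HD (- D / 2)) as [d1 Hd1]. lra.
  set (h := Rmin d d1 / 2).
  assert (Hh : 0 < h < d /\ h < d1).
  { unfold h. pose proof (Rmin_l d d1). pose proof (Rmin_r d d1).
    pose proof (cond_pos d1). assert (0 < Rmin d d1) by (apply Rmin_pos; lra). lra. }
  destruct (MVT_cor2 f (Derive f) x0 (x0 + h)) as [c [Ec Hc]]. lra.
  { intros c _. apply is_derive_Reals, Derive_correct, Hf. }
  assert (Dc : Derive f c < 0).
  { specialize (Hd1 (c - x0)). replace (x0 + (c - x0)) with c in Hd1 by ring.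
    rewrite D0 in Hd1.
    assert (Habs : Rabs ((Derive f c - 0) / (c - x0) - D) < - D / 2).
    { apply Hd1. lra. rewrite Rabs_right; lra. }
    apply Rabs_def2 in Habs. destruct Habs as [H1 H2].
    assert ((Derive f c - 0) / (c - x0) < 0) by lra.
    assert (0 < c - x0) by lra.
    destruct (Rle_or_lt 0 (Derive f c)); auto.
    assert (0 <= (Derive f c - 0) / (c - x0)).
    { unfold Rdiv. apply Rmult_le_pos. lra. left; apply Rinv_0_lt_compat; lra. }
    lra. }
  assert (f (x0 + h) < 0). { rewrite E0 in Ec. nra. }
  specialize (Hpos (x0 + h)). lra.
Qed.

Lemma W2f_X k p : W2f (Xk k) p = Derive (Derive (Pk k)) (fst p).
Proof.
  unfold W2f, Wf, Xk; simpl.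
  rewrite Derive_const.
  rewrite (Derive_ext (fun x : R => 0 * 1 + 1 * Derive (Pk k) x) (Derive (Pk k))) by (intros; ring).
  ring.
Qed.

Lemma Wf_X k p : Wf (Xk k) p = Derive (Pk k) (fst p).
Proof. unfold Wf, Xk; simpl; ring. Qed.
Lemma Wf_Y k p : Wf (Yk k) p = Derive (Pk k) (fst p).
Proof. unfold Wf, Yk; simpl; ring. Qed.

Lemma Lambda_Sigma k p : Lambda k p -> snd p = 0 -> Pk k (fst p) = 0.
Proof. intros [H [E|E]] S; lra. Qed.

Lemma no_singular k p : (3 <= k)%nat -> Lambda k p -> ~ singular_tangency (Xk k) (Yk k) p.
Proof.
  intros hk HL [[HS [HW HW2]] _].
  unfold Sigma in HS. pose proof (Lambda_Sigma k p HL HS) as HP.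
  destruct HL as [Hx _].
  rewrite Wf_X in HW. rewrite W2f_X in HW2.
  destruct (Pk_zero_inv k (fst p) Hx HP) as [E|[E|[l [Hl E]]]].
  - pose proof (Derive_Pk_r0 k hk). rewrite <- E in H. lra.
  - pose proof (Derive_Pk_r1 k hk). rewrite <- E in H. lra.
  - assert (0 <= Derive (Derive (Pk k)) (fst p)).
    { apply (second_deriv_sign (Pk k) (fst p) (/2) _ ltac:(lra) (Pk_ex_derive k) HP HW).
      - intros x Hx'. apply Pk_nonneg. pose proof (pj_bounds k l Hl). lra.
      - apply Derive_correct, Pk'_ex_derive. }
    lra.
Qed.

Lemma cont_on_eps (phi : R -> pt) a b u :
  continuous_on (fun t => a <= t <= b) phi -> a <= u <= b ->
  forall e, 0 < e -> exists d, 0 < d /\ forall t, a <= t <= b -> Rabs (t - u) < d ->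
    Rabs (fst (phi t) - fst (phi u)) < e /\ Rabs (snd (phi t) - snd (phi u)) < e.
Proof.
  intros Hc Hu e He.
  specialize (Hc u Hu (fun q => Rabs (fst q - fst (phi u)) < e /\ Rabs (snd q - snd (phi u)) < e)).
  destruct Hc as [d Hd].
  - exists (mkposreal e He). intros [y1 y2] [B1 B2]. simpl in *. split; auto.
  - exists d; split. apply cond_pos. intros t Ht Htu. apply Hd; auto.
Qed.

Lemma near_point a b u d : a < b -> a <= u <= b -> 0 < d -> exists t, a < t < b /\ Rabs (t - u) < d.
Proof.
  intros Hab Hu Hd.
  destruct (Rlt_or_le u b).
  - exists (u + Rmin d (b - u) / 2).
    assert (0 < Rmin d (b - u)) by (apply Rmin_pos; lra).
    pose proof (Rmin_l d (b - u)). pose proof (Rmin_r d (b - u)).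
    split. lra. rewrite Rabs_right; lra.
  - exists (b - Rmin d (b - a) / 2).
    assert (0 < Rmin d (b - a)) by (apply Rmin_pos; lra).
    pose proof (Rmin_l d (b - a)). pose proof (Rmin_r d (b - a)).
    split. lra. rewrite Rabs_left; lra.
Qed.

Lemma extend_endpoints (phi : R -> pt) (G1 G2 : R -> R) a b :
  a < b -> continuous_on (fun t => a <= t <= b) phi ->
  (forall t, continuity_pt G1 t) -> (forall t, continuity_pt G2 t) ->
  (forall t, a < t < b -> phi t = (G1 t, G2 t)) ->
  forall t, a <= t <= b -> phi t = (G1 t, G2 t).
Proof.
  intros Hab Hc C1 C2 E u Hu.
  assert (K : forall (x y : R), (forall e, 0 < e -> Rabs (x - y) < 2 * e) -> x = y).
  { intros x y H. destruct (Req_dec x y) as [|n]; auto. exfalso.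
    assert (0 < Rabs (x - y)) by (apply Rabs_pos_lt; lra).
    specialize (H (Rabs (x - y) / 2) ltac:(lra)). lra. }
  destruct (phi u) as [x y] eqn:Eu. f_equal.
  - apply K; intros e He.
    destruct (cont_on_eps phi a b u Hc Hu e He) as [d1 [Hd1 P1]].
    destruct (C1 u e He) as [d2 [Hd2 P2]].
    destruct (near_point a b u (Rmin d1 d2) Hab Hu) as [t [Ht Htu]]. apply Rmin_pos; lra.
    pose proof (Rmin_l d1 d2). pose proof (Rmin_r d1 d2).
    destruct (P1 t) as [Q1 _]; [lra|lra|].
    assert (Q2 : Rabs (G1 t - G1 u) < e).
    { destruct (Req_dec t u) as [->|ntu]. rewrite Rminus_diag, Rabs_R0; lra.
      apply P2. split. split. constructor. auto. simpl. unfold R_dist. lra. }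
    rewrite E in Q1 by lra. rewrite Eu in Q1. simpl in Q1.
    replace (x - G1 u) with (-(G1 t - x) + (G1 t - G1 u)) by ring.
    eapply Rle_lt_trans. apply Rabs_triang. rewrite Rabs_Ropp. lra.
  - apply K; intros e He.
    destruct (cont_on_eps phi a b u Hc Hu e He) as [d1 [Hd1 P1]].
    destruct (C2 u e He) as [d2 [Hd2 P2]].
    destruct (near_point a b u (Rmin d1 d2) Hab Hu) as [t [Ht Htu]]. apply Rmin_pos; lra.
    pose proof (Rmin_l d1 d2). pose proof (Rmin_r d1 d2).
    destruct (P1 t) as [_ Q1]; [lra|lra|].
    assert (Q2 : Rabs (G2 t - G2 u) < e).
    { destruct (Req_dec t u) as [->|ntu]. rewrite Rminus_diag, Rabs_R0; lra.
      apply P2. split. split. constructor. auto. simpl. unfold R_dist. lra. }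
    rewrite E in Q1 by lra. rewrite Eu in Q1. simpl in Q1.
    replace (y - G2 u) with (-(G2 t - y) + (G2 t - G2 u)) by ring.
    eapply Rle_lt_trans. apply Rabs_triang. rewrite Rabs_Ropp. lra.
Qed.

Lemma const_deriv (g : R -> R) a b :
  (forall t, a < t < b -> is_derive g t 0) ->
  forall t1 t2, a < t1 < b -> a < t2 < b -> g t1 = g t2.
Proof.
  intros H t1 t2 H1 H2.
  destruct (MVT_gen g t1 t2 (fun _ => 0)) as [c [_ Ec]].
  - intros x Hx. apply H. pose proof (Rmin_l t1 t2); pose proof (Rmin_r t1 t2);
    pose proof (Rmax_l t1 t2); pose proof (Rmax_r t1 t2).
    destruct (Rle_dec t1 t2); [rewrite Rmin_left, Rmax_right in Hx by lra|
      rewrite Rmin_right, Rmax_left in Hx by lra]; lra.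
  - intros x Hx. apply continuity_pt_filterlim. apply (ex_derive_continuous g x).
    exists 0. apply H.
    destruct (Rle_dec t1 t2); [rewrite Rmin_left, Rmax_right in Hx by lra|
      rewrite Rmin_right, Rmax_left in Hx by lra]; lra.
  - lra.
Qed.

Definition sg (b : bool) : R := if b then 1 else -1.
Lemma sg_sq b : sg b * sg b = 1.
Proof. destruct b; simpl; ring. Qed.

Lemma ode k (W : field) (s : bool) a b phi :
  (forall p, W p = (sg s, Derive (Pk k) (fst p))) ->
  int_curve W a b phi -> a < b ->
  exists c1 c2, forall t, a <= t <= b ->
    phi t = (c1 + sg s * t, sg s * Pk k (c1 + sg s * t) + c2).
Proof.
  intros HW [_ [Hc Hd]] Hab.
  set (m := (a + b) / 2).
  assert (Hm : a < m < b) by (unfold m; lra).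
  assert (D1 : forall t, a < t < b -> is_derive (fun u => fst (phi u)) t (sg s)).
  { intros t Ht. pose proof (is_derive_fst _ _ _ (Hd t Ht)). rewrite HW in H. exact H. }
  assert (D2 : forall t, a < t < b -> is_derive (fun u => snd (phi u)) t (Derive (Pk k) (fst (phi t)))).
  { intros t Ht. pose proof (is_derive_snd _ _ _ (Hd t Ht)). rewrite HW in H. exact H. }
  set (c1 := fst (phi m) - sg s * m).
  assert (F1 : forall t, a < t < b -> fst (phi t) = c1 + sg s * t).
  { intros t Ht.
    assert (fst (phi t) - sg s * t = fst (phi m) - sg s * m).
    { apply (const_deriv (fun u => fst (phi u) - sg s * u) a b); auto.
      intros u Hu. replace 0 with (sg s - sg s * 1) by ring.
      apply (is_derive_minus (fun u => fst (phi u)) (fun u => sg s * u)). auto.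
      auto_derive; auto. }
    unfold c1; lra. }
  set (c2 := snd (phi m) - sg s * Pk k (c1 + sg s * m)).
  assert (F2 : forall t, a < t < b -> snd (phi t) = sg s * Pk k (c1 + sg s * t) + c2).
  { intros t Ht.
    assert (snd (phi t) - sg s * Pk k (c1 + sg s * t) = snd (phi m) - sg s * Pk k (c1 + sg s * m)).
    { apply (const_deriv (fun u => snd (phi u) - sg s * Pk k (c1 + sg s * u)) a b); auto.
      intros u Hu.
      replace 0 with (Derive (Pk k) (fst (phi u)) - sg s * (sg s * Derive (Pk k) (c1 + sg s * u))).
      2:{ rewrite F1 by auto. rewrite <- Rmult_assoc, sg_sq. ring. }
      apply (is_derive_minus (fun u => snd (phi u)) (fun u => sg s * Pk k (c1 + sg s * u))). auto.
      apply is_derive_scal.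
      apply (is_derive_comp (Pk k) (fun u => c1 + sg s * u)).
      apply Derive_correct, Pk_ex_derive.
      auto_derive; auto; ring. }
    unfold c2; lra. }
  exists c1, c2.
  apply (extend_endpoints phi (fun t => c1 + sg s * t) (fun t => sg s * Pk k (c1 + sg s * t) + c2) a b Hab Hc).
  - intros t. reg.
  - intros t. apply continuity_pt_plus; [|apply continuity_pt_const; intros ? ?; auto].
    apply continuity_pt_scal.
    apply (continuity_pt_comp (fun u => c1 + sg s * u) (Pk k)). reg. apply Pk_cont.
  - intros t Ht. cbv beta. rewrite <- F2, <- F1 by auto. destruct (phi t); auto.
Qed.

Definition Mform k s c t : pt := (c + sg s * t, sg s * Pk k (c + sg s * t)).
Definition Wk k (s : bool) : field := if s then Xk k else Yk k.

Lemma Wk_eq k s p : Wk k s p = (sg s, Derive (Pk k) (fst p)).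
Proof. destruct s; reflexivity. Qed.

Definition is_curve k s a b (phi : R -> pt) :=
  int_curve (Wk k s) a b phi /\ forall t, a <= t <= b -> 0 <= sg s * snd (phi t).

Lemma Lambda_Mform k s c t : r0 k <= c + sg s * t <= r1 k -> Lambda k (Mform k s c t).
Proof. intros H. split; simpl; auto. destruct s; simpl; [left|right]; ring. Qed.

Lemma curve_lambda k s a b phi t0 : (3 <= k)%nat ->
  is_curve k s a b phi -> a <= t0 <= b -> Lambda k (phi t0) ->
  exists c, forall t, a <= t <= b -> phi t = Mform k s c t /\ r0 k <= c + sg s * t <= r1 k.
Proof.
  intros hk [Hc Hs] Ht0 HL.
  destruct Hc as [Hab Hc'].
  destruct Hab as [Hlt|Heq].
  - destruct (ode k (Wk k s) s a b phi (Wk_eq k s) (conj (Rlt_le _ _ Hlt) Hc') Hlt) as [c1 [c2 Hf]].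
    assert (c2 = 0).
    { pose proof (Hf t0 Ht0) as E. specialize (Hs t0 Ht0).
      destruct HL as [Hx [Hy|Hy]]; rewrite E in Hx, Hy, Hs; simpl in *.
      - pose proof (Pk_nonneg k _ Hx). destruct s; simpl in *; nra.
      - pose proof (Pk_nonneg k _ Hx). destruct s; simpl in *; nra. }
    subst c2. exists c1. intros t Ht. rewrite Hf by auto.
    split. unfold Mform; f_equal; ring.
    specialize (Hs t Ht). rewrite Hf in Hs by auto. simpl in Hs.
    assert (E2: sg s * (sg s * Pk k (c1 + sg s * t) + 0) = Pk k (c1 + sg s * t)) by (destruct s; simpl; ring).
    rewrite E2 in Hs.
    destruct (Rle_or_lt (r0 k) (c1 + sg s * t)); destruct (Rle_or_lt (c1 + sg s * t) (r1 k));
      try (split; auto; fail);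
      exfalso; assert (Pk k (c1 + sg s * t) < 0) by (apply Pk_neg; auto); lra.
  - subst b. exists (fst (phi t0) - sg s * t0). intros t Ht.
    assert (t = t0) by lra. subst t. assert (t0 = a) by lra. subst t0.
    replace (fst (phi a) - sg s * a + sg s * a) with (fst (phi a)) by ring.
    split; [|apply HL]. specialize (Hs a Ht).
    destruct HL as [Hx [Hy|Hy]]; pose proof (Pk_nonneg k _ Hx);
      unfold Mform; destruct (phi a) as [x y]; simpl in *;
      replace (x - sg s * a + sg s * a) with x by ring; f_equal;
      destruct s; simpl in *; nra.
Qed.

Lemma sliding_escaping_none k q : ~ (sliding (Xk k) (Yk k) q \/ escaping (Xk k) (Yk k) q).
Proof.
  unfold sliding, escaping; rewrite Wf_X, Wf_Y; lra.
Qed.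

Lemma followZT_none k a b phi : ~ followZT (Xk k) (Yk k) a b phi.
Proof.
  intros [[Hab _] H]. destruct (H a ltac:(lra) 1 ltac:(lra)) as [q [Hq _]].
  eapply sliding_escaping_none; eauto.
Qed.

Lemma followX_curve k a b phi : followX (Xk k) (Yk k) a b phi -> is_curve k true a b phi.
Proof. intros [H1 H2]; split; auto. intros t Ht; specialize (H2 t Ht); unfold SigmaPlus in H2; simpl; lra. Qed.
Lemma followY_curve k a b phi : followY (Xk k) (Yk k) a b phi -> is_curve k false a b phi.
Proof. intros [H1 H2]; split; auto. intros t Ht; specialize (H2 t Ht); unfold SigmaMinus in H2; simpl; lra. Qed.

Lemma followAny_curve k a b phi : followAny (Xk k) (Yk k) a b phi ->
  exists s, is_curve k s a b phi.
Proof.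
  intros [H|[H|H]]. exists true; apply followX_curve; auto.
  exists false; apply followY_curve; auto. exfalso; eapply followZT_none; eauto.
Qed.

Lemma curve_restrict k s a b a' b' phi : a <= a' -> a' <= b' -> b' <= b ->
  is_curve k s a b phi -> is_curve k s a' b' phi.
Proof.
  intros H1 H2 H3 [[_ [Hc Hd]] Hs]. split; [split; [auto|split]|].
  - eapply continuous_on_subset; [|exact Hc]. simpl; intros; lra.
  - intros; apply Hd; lra.
  - intros; apply Hs; lra.
Qed.

Lemma local_halves k p a b phi : (3 <= k)%nat -> local_traj (Xk k) (Yk k) p a b phi ->
  (singular_tangency (Xk k) (Yk k) p /\ forall t, a <= t <= b -> phi t = p) \/
  exists s1 s2, is_curve k s1 a 0 phi /\ is_curve k s2 0 b phi.
Proof.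
  intros hk [Hab [H0 H]].
  destruct H as [[_ H]|[[_ H]|[[_ [H1 H2]]|[[_ [H1 H2]]|[[_ [H1 H2]]|[[_ [H1 H2]]|[[_ [H1 H2]]|[Hs H1]]]]]]]].
  - right. apply followX_curve in H. exists true, true.
    split; eapply curve_restrict; eauto; lra.
  - right. apply followY_curve in H. exists false, false.
    split; eapply curve_restrict; eauto; lra.
  - right. exists false, true. split. apply followY_curve; auto. apply followX_curve; auto.
  - right. exists true, false. split. apply followX_curve; auto. apply followY_curve; auto.
  - exfalso; eapply followZT_none; eauto.
  - exfalso; eapply followZT_none; eauto.
  - right. destruct (followAny_curve _ _ _ _ H1) as [s1 ?].
    destruct (followAny_curve _ _ _ _ H2) as [s2 ?]. exists s1, s2; auto.
  - left; auto.
Qed.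

Lemma curve_lambda_all k s a b phi t0 : (3 <= k)%nat ->
  is_curve k s a b phi -> a <= t0 <= b -> Lambda k (phi t0) ->
  forall t, a <= t <= b -> Lambda k (phi t).
Proof.
  intros hk Hc Ht0 HL t Ht.
  destruct (curve_lambda k s a b phi t0 hk Hc Ht0 HL) as [c Hf].
  destruct (Hf t Ht) as [-> ?]. apply Lambda_Mform; auto.
Qed.

Lemma local_lambda k p a b phi t0 : (3 <= k)%nat -> local_traj (Xk k) (Yk k) p a b phi ->
  a <= t0 <= b -> Lambda k (phi t0) -> forall t, a <= t <= b -> Lambda k (phi t).
Proof.
  intros hk HT Ht0 HL t Ht.
  pose proof HT as [Hab _].
  destruct (local_halves k p a b phi hk HT) as [[_ Hc]|[s1 [s2 [C1 C2]]]].
  - rewrite Hc by auto. rewrite <- (Hc t0); auto.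
  - destruct (Rle_or_lt t0 0).
    + assert (L0 : Lambda k (phi 0)) by (apply (curve_lambda_all k s1 a 0 phi t0); auto; lra).
      destruct (Rle_or_lt t 0).
      * apply (curve_lambda_all k s1 a 0 phi t0); auto; lra.
      * apply (curve_lambda_all k s2 0 b phi 0); auto; lra.
    + assert (L0 : Lambda k (phi 0)) by (apply (curve_lambda_all k s2 0 b phi t0); auto; lra).
      destruct (Rle_or_lt t 0).
      * apply (curve_lambda_all k s1 a 0 phi 0); auto; lra.
      * apply (curve_lambda_all k s2 0 b phi t0); auto; lra.
Qed.


Lemma piece_aux (tt : Z -> R) t : forall n N, tt N <= t -> t < tt (N + Z.of_nat n)%Z ->
  exists i, tt i <= t < tt (i + 1)%Z.
Proof.
  induction n; intros N H1 H2.
  - rewrite Z.add_0_r in H2. lra.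
  - destruct (Rle_or_lt (tt (N + 1)%Z) t).
    + apply (IHn (N + 1)%Z); auto. replace (N + 1 + Z.of_nat n)%Z with (N + Z.of_nat (S n))%Z by lia. auto.
    + exists N; auto.
Qed.

Lemma piece_aux' (tt : Z -> R) t : forall n N, tt N < t -> t <= tt (N + Z.of_nat n)%Z ->
  exists i, tt i < t <= tt (i + 1)%Z.
Proof.
  induction n; intros N H1 H2.
  - rewrite Z.add_0_r in H2. lra.
  - destruct (Rlt_or_le (tt (N + 1)%Z) t).
    + apply (IHn (N + 1)%Z); auto. replace (N + 1 + Z.of_nat n)%Z with (N + Z.of_nat (S n))%Z by lia. auto.
    + exists N; auto.
Qed.

Lemma find_piece (tt : Z -> R) t :
  (forall M, exists N, forall i, (N <= i)%Z -> M < tt i) ->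
  (forall M, exists N, forall i, (i <= N)%Z -> tt i < M) ->
  exists i, tt i <= t < tt (i + 1)%Z.
Proof.
  intros Hup Hdn. destruct (Hdn t) as [N0 H0]. destruct (Hup t) as [N1 H1].
  specialize (H0 N0 (Z.le_refl _)).
  destruct (Z.le_gt_cases N0 N1).
  - apply (piece_aux tt t (Z.to_nat (N1 - N0)) N0). lra.
    rewrite Z2Nat.id by lia. replace (N0 + (N1 - N0))%Z with N1 by lia. apply H1; lia.
  - specialize (H1 N0 ltac:(lia)). lra.
Qed.

Lemma find_piece' (tt : Z -> R) t :
  (forall M, exists N, forall i, (N <= i)%Z -> M < tt i) ->
  (forall M, exists N, forall i, (i <= N)%Z -> tt i < M) ->
  exists i, tt i < t <= tt (i + 1)%Z.
Proof.
  intros Hup Hdn. destruct (Hdn t) as [N0 H0]. destruct (Hup t) as [N1 H1].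
  specialize (H0 N0 (Z.le_refl _)).
  destruct (Z.le_gt_cases N0 N1).
  - apply (piece_aux' tt t (Z.to_nat (N1 - N0)) N0). lra.
    rewrite Z2Nat.id by lia. replace (N0 + (N1 - N0))%Z with N1 by lia. left; apply H1; lia.
  - specialize (H1 N0 ltac:(lia)). lra.
Qed.

Theorem invariance k : (3 <= k)%nat -> invariant (Xk k) (Yk k) (Lambda k).
Proof.
  intros hk gamma [tt [mono [up [down pieces]]]] H0.
  assert (Hp : forall i, (exists u, tt i <= u <= tt (i + 1)%Z /\ Lambda k (gamma u)) ->
             forall t, tt i <= t <= tt (i + 1)%Z -> Lambda k (gamma t)).
  { intros i [u [Hu Lu]] t Ht.
    destruct (pieces i) as [p [s [a [b [phi [HT [Ha [Hb E]]]]]]]].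
    rewrite E by auto. rewrite E in Lu by auto.
    apply (local_lambda k p a b phi (u - s) hk HT); auto; lra. }
  destruct (find_piece tt 0 up down) as [i0 Hi0].
  assert (B0 : forall t, tt i0 <= t <= tt (i0 + 1)%Z -> Lambda k (gamma t)).
  { apply Hp. exists 0; split; auto; lra. }
  assert (Fw : forall n : nat, forall t, tt (i0 + Z.of_nat n)%Z <= t <= tt (i0 + Z.of_nat n + 1)%Z -> Lambda k (gamma t)).
  { induction n. simpl. rewrite Z.add_0_r. auto.
    apply Hp. exists (tt (i0 + Z.of_nat (S n))%Z). split.
    pose proof (mono (i0 + Z.of_nat (S n))%Z). lra.
    apply IHn. replace (i0 + Z.of_nat n + 1)%Z with (i0 + Z.of_nat (S n))%Z by lia.
    pose proof (mono (i0 + Z.of_nat n)%Z). replace (i0 + Z.of_nat (S n))%Z with (i0 + Z.of_nat n + 1)%Z by lia. lra. }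
  assert (Bw : forall n : nat, forall t, tt (i0 - Z.of_nat n)%Z <= t <= tt (i0 - Z.of_nat n + 1)%Z -> Lambda k (gamma t)).
  { induction n. simpl. rewrite Z.sub_0_r. auto.
    apply Hp. exists (tt (i0 - Z.of_nat (S n) + 1)%Z). split.
    pose proof (mono (i0 - Z.of_nat (S n))%Z). lra.
    apply IHn. replace (i0 - Z.of_nat (S n) + 1)%Z with (i0 - Z.of_nat n)%Z by lia.
    pose proof (mono (i0 - Z.of_nat n)%Z). lra. }
  intros t. destruct (find_piece tt t up down) as [i Hi].
  destruct (Z.le_gt_cases i0 i).
  - apply (Fw (Z.to_nat (i - i0))). rewrite Z2Nat.id by lia.
    replace (i0 + (i - i0))%Z with i by lia. lra.
  - apply (Bw (Z.to_nat (i0 - i))). rewrite Z2Nat.id by lia.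
    replace (i0 - (i0 - i))%Z with i by lia. lra.
Qed.

Lemma global_shift X Y g c : global_traj X Y g -> global_traj X Y (fun t => g (t + c)).
Proof.
  intros [tt [mono [up [down pieces]]]].
  exists (fun i => tt i - c). split; [|split; [|split]].
  - intros i; specialize (mono i); lra.
  - intros M. destruct (up (M + c)) as [N HN]. exists N; intros i Hi; specialize (HN i Hi); lra.
  - intros M. destruct (down (M + c)) as [N HN]. exists N; intros i Hi; specialize (HN i Hi); lra.
  - intros i. destruct (pieces i) as [p [s [a [b [phi [HT [Ha [Hb E]]]]]]]].
    exists p, (s - c), a, b, phi. split; auto. split; [lra|split; [lra|]].
    intros t Ht. rewrite E by lra. f_equal; ring.
Qed.

Lemma Mform_shift k s c u s0 : Mform k s c (u - s0) = Mform k s (c - sg s * s0) u.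
Proof. unfold Mform. replace (c + sg s * (u - s0)) with (c - sg s * s0 + sg s * u) by ring. auto. Qed.

Lemma germ_fw k g : (3 <= k)%nat -> global_traj (Xk k) (Yk k) g -> (forall t, Lambda k (g t)) ->
  forall t, exists e, 0 < e /\ exists s c, forall u, t <= u <= t + e -> g u = Mform k s c u.
Proof.
  intros hk [tt [mono [up [down pieces]]]] HL t.
  destruct (find_piece tt t up down) as [i Hi].
  destruct (pieces i) as [p [s0 [a [b [phi [HT [Ha [Hb E]]]]]]]].
  pose proof HT as [Hab _].
  assert (Lt : Lambda k (phi (t - s0))) by (rewrite <- E by lra; auto).
  destruct (local_halves k p a b phi hk HT) as [[Hs Hc]|[s1 [s2 [C1 C2]]]].
  - exfalso. rewrite Hc in Lt by lra. apply (no_singular k p hk Lt Hs).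
  - destruct (Rlt_or_le (t - s0) 0).
    + destruct (curve_lambda k s1 a 0 phi (t - s0) hk C1 ltac:(lra) Lt) as [c Hf].
      exists (Rmin 0 (tt (i + 1)%Z - s0) - (t - s0)). split.
      { apply Rlt_Rminus. apply Rmin_glb_lt; lra. }
      exists s1, (c - sg s1 * s0). intros u Hu.
      pose proof (Rmin_l 0 (tt (i + 1)%Z - s0)). pose proof (Rmin_r 0 (tt (i + 1)%Z - s0)).
      rewrite E by lra. rewrite <- Mform_shift. apply Hf. lra.
    + destruct (curve_lambda k s2 0 b phi (t - s0) hk C2 ltac:(lra) Lt) as [c Hf].
      exists (tt (i + 1)%Z - t). split. lra.
      exists s2, (c - sg s2 * s0). intros u Hu.
      rewrite E by lra. rewrite <- Mform_shift. apply Hf. lra.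
Qed.

Lemma germ_bw k g : (3 <= k)%nat -> global_traj (Xk k) (Yk k) g -> (forall t, Lambda k (g t)) ->
  forall t, exists e, 0 < e /\ exists s c, forall u, t - e <= u <= t -> g u = Mform k s c u.
Proof.
  intros hk [tt [mono [up [down pieces]]]] HL t.
  destruct (find_piece' tt t up down) as [i Hi].
  destruct (pieces i) as [p [s0 [a [b [phi [HT [Ha [Hb E]]]]]]]].
  pose proof HT as [Hab _].
  assert (Lt : Lambda k (phi (t - s0))) by (rewrite <- E by lra; auto).
  destruct (local_halves k p a b phi hk HT) as [[Hs Hc]|[s1 [s2 [C1 C2]]]].
  - exfalso. rewrite Hc in Lt by lra. apply (no_singular k p hk Lt Hs).
  - destruct (Rle_or_lt (t - s0) 0).
    + destruct (curve_lambda k s1 a 0 phi (t - s0) hk C1 ltac:(lra) Lt) as [c Hf].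
      exists (t - tt i). split. lra.
      exists s1, (c - sg s1 * s0). intros u Hu.
      rewrite E by lra. rewrite <- Mform_shift. apply Hf. lra.
    + destruct (curve_lambda k s2 0 b phi (t - s0) hk C2 ltac:(lra) Lt) as [c Hf].
      exists ((t - s0) - Rmax 0 (tt i - s0)). split.
      { apply Rlt_Rminus. apply Rmax_lub_lt; lra. }
      exists s2, (c - sg s2 * s0). intros u Hu.
      pose proof (Rmax_l 0 (tt i - s0)). pose proof (Rmax_r 0 (tt i - s0)).
      rewrite E by lra. rewrite <- Mform_shift. apply Hf. lra.
Qed.

Definition on k s c (g : R -> pt) u v := forall t, u <= t <= v -> g t = Mform k s c t.
Definition Germs k (g : R -> pt) :=
  (forall t, exists e, 0 < e /\ exists s c, on k s c g t (t + e)) /\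
  (forall t, exists e, 0 < e /\ exists s c, on k s c g (t - e) t).

Lemma germs_of k g : (3 <= k)%nat -> global_traj (Xk k) (Yk k) g -> (forall t, Lambda k (g t)) -> Germs k g.
Proof. intros; split; [apply germ_fw|apply germ_bw]; auto. Qed.

Lemma sg_inj s1 s2 : sg s1 = sg s2 -> s1 = s2.
Proof. destruct s1, s2; simpl; auto; intros; lra. Qed.

Lemma on_agree k s c s' c' g u v : u < v -> on k s c g u v -> on k s' c' g u v -> s = s' /\ c = c'.
Proof.
  intros Huv H1 H2.
  pose proof (H1 u ltac:(lra)) as A1. pose proof (H2 u ltac:(lra)) as A2.
  pose proof (H1 v ltac:(lra)) as B1. pose proof (H2 v ltac:(lra)) as B2.
  rewrite A1 in A2. rewrite B1 in B2. unfold Mform in *.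
  injection A2 as A2 _. injection B2 as B2 _.
  assert (sg s = sg s') by nra. split. apply sg_inj; auto. nra.
Qed.

Lemma on_sub k s c g u v u' v' : u <= u' -> v' <= v -> on k s c g u v -> on k s c g u' v'.
Proof. intros H1 H2 H t Ht; apply H; lra. Qed.

Lemma on_glue k s c g u v w : on k s c g u v -> on k s c g v w -> on k s c g u w.
Proof. intros H1 H2 t Ht. destruct (Rle_or_lt t v); [apply H1|apply H2]; lra. Qed.

Lemma exists_above (E : R -> Prop) m w : is_lub E m -> w < m -> exists v, E v /\ w < v.
Proof.
  intros [Hub Hl] Hw. destruct (classic (exists v, E v /\ w < v)) as [|N]; auto.
  exfalso. assert (m <= w). { apply Hl. intros v Ev. destruct (Rle_or_lt v w); auto. exfalso; apply N; eauto. }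
  lra.
Qed.

Lemma cont_fw k g s c t L : Germs k g -> 0 < L ->
  (exists e, 0 < e /\ on k s c g t (t + e)) ->
  (forall tau, 0 < tau < L -> 0 < Pk k (c + sg s * (t + tau))) ->
  on k s c g t (t + L).
Proof.
  intros [Gf Gb] HL [e [He Hon]] Hpos.
  set (E := fun v => t <= v <= t + L /\ on k s c g t v).
  assert (Eb : bound E) by (exists (t + L); intros v [Hv _]; lra).
  assert (Ene : exists x, E x) by (exists t; split; [lra|apply (on_sub k s c g t (t+e)); auto; lra]).
  destruct (completeness E Eb Ene) as [m Hm].
  set (w := Rmin (t + e) (t + L)).
  assert (Ew : E w).
  { unfold w; pose proof (Rmin_l (t+e) (t+L)); pose proof (Rmin_r (t+e) (t+L)).
    split. split; [apply Rmin_glb; lra|auto]. apply (on_sub k s c g t (t+e)); auto; lra. }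
  assert (Hmw : w <= m) by (apply (proj1 Hm); auto).
  assert (Hwt : t < w) by (unfold w; apply Rmin_glb_lt; lra).
  assert (HmL : m <= t + L) by (apply (proj2 Hm); intros v [Hv _]; lra).
  assert (C1 : on k s c g t m).
  { destruct (Gb m) as [e1 [He1 [s1 [c1 H1]]]].
    destruct (exists_above E m (Rmax t (m - e1)) Hm) as [v [[Hv Ev] Hvw]].
    { apply Rmax_lub_lt; lra. }
    pose proof (Rmax_l t (m - e1)). pose proof (Rmax_r t (m - e1)).
    assert (v <= m) by (apply (proj1 Hm); split; auto).
    destruct (on_agree k s c s1 c1 g (Rmax t (m - e1)) v) as [<- <-]; auto.
    apply (on_sub k s c g t v); auto; lra.
    apply (on_sub k s1 c1 g (m - e1) m); auto; lra.
    apply (on_glue k s c g t v m); auto. apply (on_sub k s c g (m - e1) m); auto; lra. }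
  destruct (Req_dec m (t + L)) as [<-|Hne]; auto.
  exfalso.
  destruct (Gf m) as [e2 [He2 [s2 [c2 H2]]]].
  assert (Em : m < t + L) by lra.
  pose proof (C1 m ltac:(lra)) as A1. pose proof (H2 m ltac:(lra)) as A2.
  rewrite A1 in A2. unfold Mform in A2. injection A2 as Ax Ay.
  assert (s2 = s).
  { destruct (Bool.bool_dec s2 s) as [|n]; auto. exfalso.
    assert (P0 : 0 < Pk k (c + sg s * (t + (m - t)))) by (apply Hpos; lra).
    replace (t + (m - t)) with m in P0 by ring.
    rewrite <- Ax in Ay. destruct s, s2; simpl in *; try congruence; lra. }
  subst s2. assert (c2 = c) by lra. subst c2.
  assert (E (Rmin (m + e2) (t + L))).
  { pose proof (Rmin_l (m+e2) (t+L)); pose proof (Rmin_r (m+e2) (t+L)).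
    split. split; [apply Rmin_glb; lra|auto]. apply (on_glue k s c g t m); auto.
    apply (on_sub k s c g m (m + e2)); auto; lra. }
  assert (Rmin (m + e2) (t + L) <= m) by (apply (proj1 Hm); auto).
  assert (m < Rmin (m + e2) (t + L)) by (apply Rmin_glb_lt; lra). lra.
Qed.

Definition refl (g : R -> pt) : R -> pt := fun t => (fst (g (- t)), - snd (g (- t))).

Lemma on_refl k s c g u v : on k s c g u v -> on k (negb s) c (refl g) (- v) (- u).
Proof.
  intros H t Ht. unfold refl. rewrite H by lra. unfold Mform; simpl.
  destruct s; simpl.
  - replace (c + 1 * - t) with (c + -1 * t) by ring. f_equal; ring.
  - replace (c + -1 * - t) with (c + 1 * t) by ring. f_equal; ring.
Qed.

Lemma on_unrefl k s c g u v : on k (negb s) c (refl g) (- v) (- u) -> on k s c g u v.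
Proof.
  intros H t Ht. specialize (H (- t) ltac:(lra)). unfold refl in H.
  rewrite Ropp_involutive in H. unfold Mform in *.
  destruct (g t) as [x y]; simpl in *. injection H as H1 H2.
  destruct s; simpl in *.
  - replace (c + 1 * t) with (c + -1 * - t) by ring. rewrite <- H1.
    f_equal. rewrite H1; lra.
  - replace (c + -1 * t) with (c + 1 * - t) by ring. rewrite <- H1.
    f_equal. rewrite H1; lra.
Qed.

Lemma germs_refl k g : Germs k g -> Germs k (refl g).
Proof.
  intros [Gf Gb]. split.
  - intros t. destruct (Gb (- t)) as [e [He [s [c H]]]]. exists e; split; auto.
    exists (negb s), c. replace t with (- - t) at 1 by ring. replace (t + e) with (- (- t - e)) by ring.
    apply on_refl; auto.
  - intros t. destruct (Gf (- t)) as [e [He [s [c H]]]]. exists e; split; auto.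
    exists (negb s), c. replace (t - e) with (- (- t + e)) by ring. replace t with (- - t) at 2 by ring.
    apply on_refl; auto.
Qed.

Lemma cont_bw k g s c t L : Germs k g -> 0 < L ->
  (exists e, 0 < e /\ on k s c g (t - e) t) ->
  (forall tau, 0 < tau < L -> 0 < Pk k (c + sg s * (t - tau))) ->
  on k s c g (t - L) t.
Proof.
  intros G HL [e [He Hon]] Hpos.
  apply on_unrefl. replace (- (t - L)) with (- t + L) by ring.
  apply cont_fw; auto. apply germs_refl; auto.
  exists e; split; auto. replace (- t + e) with (- (t - e)) by ring. apply on_refl; auto.
  intros tau Ht. specialize (Hpos tau Ht).
  replace (c + sg (negb s) * (- t + tau)) with (c + sg s * (t - tau)); auto.
  destruct s; simpl; ring.
Qed.

Definition arc_start k n : nat :=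
  if Nat.eqb n 0 then 1%nat else if Nat.eqb n (2 * k - 3) then (k - 1)%nat else (Nat.div2 n + 1)%nat.
Definition arc_end k n : nat :=
  if Nat.eqb n 0 then 1%nat else if Nat.eqb n (2 * k - 3) then (k - 1)%nat
  else if Nat.odd n then (Nat.div2 n + 2)%nat else Nat.div2 n.
Definition h1 k n : bool * R :=
  if Nat.eqb n 0 then (false, pj k 1) else if Nat.eqb n (2 * k - 3) then (true, pj k (k - 1))
  else (Nat.odd n, pj k (Nat.div2 n + 1)).
Definition h2 k n : bool * R :=
  if Nat.eqb n 0 then (true, pj k 1 - 1) else if Nat.eqb n (2 * k - 3) then (false, pj k (k - 1) + 1)
  else h1 k n.
Definition Arc k n t : pt :=
  if Rle_dec t (/2) then Mform k (fst (h1 k n)) (snd (h1 k n)) t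
  else Mform k (fst (h2 k n)) (snd (h2 k n)) t.

Lemma kind k n : (3 <= k)%nat -> (n <= 2 * k - 3)%nat ->
  (n = 0%nat /\ h1 k n = (false, pj k 1) /\ h2 k n = (true, pj k 1 - 1) /\ arc_start k n = 1%nat /\ arc_end k n = 1%nat)
  \/ (n = (2 * k - 3)%nat /\ h1 k n = (true, pj k (k - 1)) /\ h2 k n = (false, pj k (k - 1) + 1)
      /\ arc_start k n = (k - 1)%nat /\ arc_end k n = (k - 1)%nat)
  \/ (exists j, (1 <= j <= k - 2)%nat /\ n = (2 * j - 1)%nat /\ h1 k n = (true, pj k j) /\ h2 k n = (true, pj k j)
      /\ arc_start k n = j /\ arc_end k n = S j)
  \/ (exists j, (1 <= j <= k - 2)%nat /\ n = (2 * j)%nat /\ h1 k n = (false, pj k (S j)) /\ h2 k n = (false, pj k (S j))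
      /\ arc_start k n = S j /\ arc_end k n = j).
Proof.
  intros hk hn. unfold h2, h1, arc_start, arc_end.
  destruct (Nat.eqb_spec n 0) as [->|n0]. left; auto.
  destruct (Nat.eqb_spec n (2 * k - 3)) as [->|n1]. right; left; auto.
  right; right. pose proof (Nat.div2_odd n) as Hd.
  destruct (Nat.odd n) eqn:Ho; simpl in Hd.
  - left. exists (Nat.div2 n + 1)%nat. split. lia. split. lia.
    replace (Nat.div2 n + 2)%nat with (S (Nat.div2 n + 1)) by lia. auto.
  - right. exists (Nat.div2 n). split. lia. split. lia.
    replace (Nat.div2 n + 1)%nat with (S (Nat.div2 n)) by lia. auto.
Qed.

Lemma k3 k : (3 <= k)%nat -> (2 * k - 3 <> 0)%nat. Proof. lia. Qed.

Lemma Arc_lo k n t : t <= /2 -> Arc k n t = Mform k (fst (h1 k n)) (snd (h1 k n)) t.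
Proof. intros; unfold Arc; destruct (Rle_dec t (/2)); [auto|lra]. Qed.

Lemma Arc_hi k n t : (3 <= k)%nat -> (n <= 2 * k - 3)%nat -> /2 <= t ->
  Arc k n t = Mform k (fst (h2 k n)) (snd (h2 k n)) t.
Proof.
  intros hk hn Ht. unfold Arc. destruct (Rle_dec t (/2)); auto.
  assert (t = /2) by lra. subst t.
  destruct (kind k n hk hn) as [[_ [-> [-> _]]]|[[_ [-> [-> _]]]|[[j [_ [_ [-> [-> _]]]]]|[j [_ [_ [-> [-> _]]]]]]]];
    auto; unfold Mform; simpl.
  - replace (pj k 1 + -1 * / 2) with (r0 k) by (rewrite pj_1; field).
    replace (pj k 1 - 1 + 1 * / 2) with (r0 k) by (rewrite pj_1; field).
    rewrite Pk_r0. f_equal; ring.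
  - replace (pj k (k - 1) + 1 * / 2) with (r1 k) by (rewrite pj_km1 by lia; field).
    replace (pj k (k - 1) + 1 + -1 * / 2) with (r1 k) by (rewrite pj_km1 by lia; field).
    rewrite Pk_r1. f_equal; ring.
Qed.

Lemma start_end_range k n : (3 <= k)%nat -> (n <= 2 * k - 3)%nat ->
  (1 <= arc_start k n <= k - 1)%nat /\ (1 <= arc_end k n <= k - 1)%nat.
Proof.
  intros hk hn.
  destruct (kind k n hk hn) as [[_ [_ [_ [-> ->]]]]|[[_ [_ [_ [-> ->]]]]|[[j [? [_ [_ [_ [-> ->]]]]]]|[j [? [_ [_ [_ [-> ->]]]]]]]]]; lia.
Qed.

Lemma Arc_0 k n : (3 <= k)%nat -> (n <= 2 * k - 3)%nat -> Arc k n 0 = (pj k (arc_start k n), 0).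
Proof.
  intros hk hn. pose proof (start_end_range k n hk hn) as [Hs _].
  rewrite Arc_lo by lra.
  destruct (kind k n hk hn) as [[_ [E1 [_ [E3 _]]]]|[[_ [E1 [_ [E3 _]]]]|[[j [? [_ [E1 [_ [E3 _]]]]]]|[j [? [_ [E1 [_ [E3 _]]]]]]]]];
    rewrite E1; rewrite E3 in *; unfold Mform; simpl fst; simpl snd;
    rewrite Rmult_0_r, Rplus_0_r, Pk_pj by auto; f_equal; ring.
Qed.

Lemma Arc_1 k n : (3 <= k)%nat -> (n <= 2 * k - 3)%nat -> Arc k n 1 = (pj k (arc_end k n), 0).
Proof.
  intros hk hn. pose proof (start_end_range k n hk hn) as [_ Hs].
  rewrite Arc_hi by (auto; lra).
  destruct (kind k n hk hn) as [[_ [_ [E1 [_ E3]]]]|[[_ [_ [E1 [_ E3]]]]|[[j [? [_ [_ [E1 [_ E3]]]]]]|[j [? [_ [_ [E1 [_ E3]]]]]]]]];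
    rewrite E1; rewrite E3 in *; unfold Mform; simpl fst; simpl snd; simpl sg.
  - replace (pj k 1 - 1 + 1 * 1) with (pj k 1) by ring. rewrite Pk_pj by auto. f_equal; ring.
  - replace (pj k (k - 1) + 1 + -1 * 1) with (pj k (k-1)) by ring. rewrite Pk_pj by auto. f_equal; ring.
  - rewrite pj_S. replace (pj k j + 1 * 1) with (pj k j + 1) by ring. rewrite <- pj_S, Pk_pj by auto. f_equal; ring.
  - rewrite pj_S. replace (pj k j + 1 + -1 * 1) with (pj k j) by ring. rewrite Pk_pj by auto. f_equal; ring.
Qed.

Lemma Arc_in k n t : (3 <= k)%nat -> (n <= 2 * k - 3)%nat -> 0 < t < 1 -> InArc k n (Arc k n t).
Proof.
  intros hk hn Ht. pose proof (pj_1 k) as P1. pose proof (pj_km1 k ltac:(lia)) as P2.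
  destruct (Rle_dec t (/2)).
  - rewrite Arc_lo by auto.
    destruct (kind k n hk hn) as [[E0 [E1 _]]|[[E0 [E1 _]]|[[j [Hj [E0 [E1 _]]]]|[j [Hj [E0 [E1 _]]]]]]];
      rewrite E1; unfold InArc, Mform; simpl fst; simpl snd; simpl sg.
    + left. split; auto. split. lra. right; ring.
    + right; right; right. split; auto. split. lra. left; ring.
    + right; left. exists j. split; auto. split; auto. rewrite pj_S. split. lra. ring.
    + right; right; left. exists j. split; auto. split; auto. rewrite pj_S. split. lra. ring.
  - rewrite Arc_hi by (auto; lra).
    destruct (kind k n hk hn) as [[E0 [_ [E1 _]]]|[[E0 [_ [E1 _]]]|[[j [Hj [E0 [_ [E1 _]]]]]|[j [Hj [E0 [_ [E1 _]]]]]]]];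
      rewrite E1; unfold InArc, Mform; simpl fst; simpl snd; simpl sg.
    + left. split; auto. split. lra. left; ring.
    + right; right; right. split; auto. split. lra. right; ring.
    + right; left. exists j. split; auto. split; auto. rewrite pj_S. split. lra. ring.
    + right; right; left. exists j. split; auto. split; auto. rewrite pj_S. split. lra. ring.
Qed.

Lemma Arc_x_range k n t : (3 <= k)%nat -> (n <= 2 * k - 3)%nat -> 0 <= t <= 1 ->
  r0 k <= fst (Arc k n t) <= r1 k.
Proof.
  intros hk hn Ht. pose proof (pj_1 k) as P1. pose proof (pj_km1 k ltac:(lia)) as P2.
  pose proof (r0_eq k). pose proof (r1_ge1 k hk).
  destruct (Rle_dec t (/2)).
  - rewrite Arc_lo by auto.
    destruct (kind k n hk hn) as [[E0 [E1 _]]|[[E0 [E1 _]]|[[j [Hj [E0 [E1 _]]]]|[j [Hj [E0 [E1 _]]]]]]];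
      rewrite E1; unfold Mform; simpl fst; simpl sg.
    + lra.
    + lra.
    + pose proof (pj_bounds k j ltac:(lia)). pose proof (pj_bounds k (S j) ltac:(lia)). rewrite pj_S in *. lra.
    + pose proof (pj_bounds k j ltac:(lia)). pose proof (pj_bounds k (S j) ltac:(lia)). rewrite pj_S in *. lra.
  - rewrite Arc_hi by (auto; lra).
    destruct (kind k n hk hn) as [[E0 [_ [E1 _]]]|[[E0 [_ [E1 _]]]|[[j [Hj [E0 [_ [E1 _]]]]]|[j [Hj [E0 [_ [E1 _]]]]]]]];
      rewrite E1; unfold Mform; simpl fst; simpl sg.
    + lra.
    + lra.
    + pose proof (pj_bounds k j ltac:(lia)). pose proof (pj_bounds k (S j) ltac:(lia)). rewrite pj_S in *. lra.
    + pose proof (pj_bounds k j ltac:(lia)). pose proof (pj_bounds k (S j) ltac:(lia)). rewrite pj_S in *. lra.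
Qed.

Lemma Arc_form k n t : exists s c, Arc k n t = Mform k s c t.
Proof. unfold Arc. destruct (Rle_dec t (/2)); eauto. Qed.

Lemma Arc_lambda k n t : (3 <= k)%nat -> (n <= 2 * k - 3)%nat -> 0 <= t <= 1 -> Lambda k (Arc k n t).
Proof.
  intros hk hn Ht. pose proof (Arc_x_range k n t hk hn Ht).
  destruct (Arc_form k n t) as [s [c E]]. rewrite E in *. apply Lambda_Mform. apply H.
Qed.

Lemma InArc_not_tang k n q : (3 <= k)%nat -> InArc k n q -> ~ IsTangPt k q.
Proof.
  intros hk H [l [Hl ->]]. pose proof (pj_bounds k l Hl).
  unfold InArc in H; simpl in H.
  destruct H as [[_ [H _]]|[[j [Hj [_ [H _]]]]|[[j [Hj [_ [H _]]]]|[_ [H _]]]]].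
  - destruct (Nat.eq_dec l 1). subst; lra. pose proof (pj_lt k 1 l ltac:(lia)). lra.
  - apply (between_not_pj k j _ H l); auto.
  - apply (between_not_pj k j _ H l); auto.
  - destruct (Nat.eq_dec l (k-1)). subst; lra. pose proof (pj_lt k l (k-1) ltac:(lia)). lra.
Qed.

Lemma InArc_unique k n m q : (3 <= k)%nat -> InArc k n q -> InArc k m q -> n = m.
Proof.
  intros hk Hn Hm. pose proof (pj_1 k) as P1. pose proof (pj_km1 k ltac:(lia)) as P2.
  assert (Hlt : forall i j, (i < j)%nat -> pj k i + 1 <= pj k j) by (intros; apply pj_lt; auto).
  assert (Hle : forall i j, (i <= j)%nat -> pj k i <= pj k j).
  { intros i j Hij. destruct (Nat.eq_dec i j). subst; lra. pose proof (Hlt i j ltac:(lia)); lra. }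
  assert (Mid : forall j x, (1 <= j <= k - 2)%nat -> pj k j < x < pj k (S j) -> 0 < Pk k x).
  { intros j x Hj Hx. apply Pk_pos. pose proof (pj_bounds k j ltac:(lia)). pose proof (pj_bounds k (S j) ltac:(lia)). lra.
    intros i _. apply (between_not_pj k j x Hx). }
  unfold InArc in *.
  destruct Hn as [[E0 [H _]]|[[j [Hj [E0 [H Hy]]]]|[[j [Hj [E0 [H Hy]]]]|[E0 [H _]]]]];
  destruct Hm as [[E0' [H' _]]|[[j' [Hj' [E0' [H' Hy']]]]|[[j' [Hj' [E0' [H' Hy']]]]|[E0' [H' _]]]]];
  subst; try lia.
  - pose proof (Hle 1%nat j' ltac:(lia)). lra.
  - pose proof (Hle 1%nat j' ltac:(lia)). lra.
  - pose proof (Hle 1%nat (k-1)%nat ltac:(lia)). lra.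
  - pose proof (Hle 1%nat j ltac:(lia)). lra.
  - destruct (Nat.lt_total j j') as [c|[c|c]]; [|subst; auto|].
    pose proof (Hle (S j) j' ltac:(lia)); rewrite pj_S in *; lra.
    pose proof (Hle (S j') j ltac:(lia)); rewrite pj_S in *; lra.
  - destruct (Nat.lt_total j j') as [c|[c|c]].
    pose proof (Hle (S j) j' ltac:(lia)); rewrite pj_S in *; lra.
    subst. pose proof (Mid j' _ Hj' H). lra.
    pose proof (Hle (S j') j ltac:(lia)); rewrite pj_S in *; lra.
  - pose proof (Hle (S j) (k-1)%nat ltac:(lia)); lra.
  - pose proof (Hle 1%nat j ltac:(lia)). lra.
  - destruct (Nat.lt_total j j') as [c|[c|c]].
    pose proof (Hle (S j) j' ltac:(lia)); rewrite pj_S in *; lra.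
    subst. pose proof (Mid j' _ Hj' H). lra.
    pose proof (Hle (S j') j ltac:(lia)); rewrite pj_S in *; lra.
  - destruct (Nat.lt_total j j') as [c|[c|c]]; [|subst; auto|].
    pose proof (Hle (S j) j' ltac:(lia)); rewrite pj_S in *; lra.
    pose proof (Hle (S j') j ltac:(lia)); rewrite pj_S in *; lra.
  - pose proof (Hle (S j) (k-1)%nat ltac:(lia)); lra.
  - pose proof (Hle 1%nat (k-1)%nat ltac:(lia)). lra.
  - pose proof (Hle (S j') (k-1)%nat ltac:(lia)); lra.
  - pose proof (Hle (S j') (k-1)%nat ltac:(lia)); lra.
Qed.

Lemma arcU k l t : (3 <= k)%nat -> (1 <= l <= k - 2)%nat ->
  Arc k (2 * l - 1) t = Mform k true (pj k l) t /\ arc_start k (2 * l - 1) = l /\ arc_end k (2 * l - 1) = S l.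
Proof.
  intros hk hl.
  destruct (kind k (2 * l - 1) hk ltac:(lia)) as [[E0 _]|[[E0 _]|[[j [Hj [E0 [E1 [E2 [E3 E4]]]]]]|[j [Hj [E0 _]]]]]]; try lia.
  replace j with l in * by lia.
  unfold Arc. destruct (Rle_dec t (/2)); rewrite ?E1, ?E2; repeat split; auto.
Qed.

Lemma arcD k j t : (3 <= k)%nat -> (1 <= j <= k - 2)%nat ->
  Arc k (2 * j) t = Mform k false (pj k (S j)) t /\ arc_start k (2 * j) = S j /\ arc_end k (2 * j) = j.
Proof.
  intros hk hl.
  destruct (kind k (2 * j) hk ltac:(lia)) as [[E0 _]|[[E0 _]|[[i [Hj [E0 _]]]|[i [Hj [E0 [E1 [E2 [E3 E4]]]]]]]]]; try lia.
  replace i with j in * by lia.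
  unfold Arc. destruct (Rle_dec t (/2)); rewrite ?E1, ?E2; repeat split; auto.
Qed.

Lemma arcL k t : (3 <= k)%nat ->
  (t <= /2 -> Arc k 0 t = Mform k false (pj k 1) t) /\ (/2 <= t -> Arc k 0 t = Mform k true (pj k 1 - 1) t)
  /\ arc_start k 0 = 1%nat /\ arc_end k 0 = 1%nat.
Proof.
  intros hk. destruct (kind k 0 hk ltac:(lia)) as [[_ [E1 [E2 [E3 E4]]]]|[[E0 _]|[[j [Hj [E0 _]]]|[j [Hj [E0 _]]]]]]; try lia.
  split; [|split; [|auto]].
  - intros; rewrite Arc_lo, E1; auto.
  - intros; rewrite Arc_hi, E2; auto; lia.
Qed.

Lemma arcR k t : (3 <= k)%nat ->
  (t <= /2 -> Arc k (2 * k - 3) t = Mform k true (pj k (k - 1)) t) /\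
  (/2 <= t -> Arc k (2 * k - 3) t = Mform k false (pj k (k - 1) + 1) t)
  /\ arc_start k (2 * k - 3) = (k - 1)%nat /\ arc_end k (2 * k - 3) = (k - 1)%nat.
Proof.
  intros hk. destruct (kind k (2 * k - 3) hk ltac:(lia)) as [[E0 _]|[[_ [E1 [E2 [E3 E4]]]]|[[j [Hj [E0 _]]]|[j [Hj [E0 _]]]]]]; try lia.
  split; [|split; [|auto]].
  - intros; rewrite Arc_lo, E1; auto.
  - intros; rewrite Arc_hi, E2; auto; lia.
Qed.

Lemma pos_U k l t : (3 <= k)%nat -> (1 <= l <= k - 2)%nat -> 0 < t < 1 -> 0 < Pk k (pj k l + t).
Proof.
  intros hk hl ht. pose proof (pj_bounds k l ltac:(lia)). pose proof (pj_bounds k (S l) ltac:(lia)).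
  rewrite pj_S in *.
  apply Pk_pos. lra. intros i _. apply (between_not_pj k l). rewrite pj_S; lra.
Qed.

Lemma pos_R k t : (3 <= k)%nat -> 0 < t < /2 -> 0 < Pk k (r1 k - t).
Proof.
  intros hk ht. pose proof (pj_km1 k ltac:(lia)). pose proof (r0_eq k). pose proof (r1_ge1 k hk).
  apply Pk_pos. lra. intros i Hi. apply (above_not_pj k); try lia. lra.
Qed.

Lemma pos_L k t : (3 <= k)%nat -> 0 < t < /2 -> 0 < Pk k (r0 k + t).
Proof.
  intros hk ht. pose proof (pj_1 k). pose proof (r0_eq k). pose proof (r1_ge1 k hk).
  apply Pk_pos. lra. intros i Hi. apply (below_not_pj k); try lia. lra.
Qed.

Lemma Mform_tr k s c t0 t : Mform k s c (t0 + t) = Mform k s (c + sg s * t0) t.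
Proof. unfold Mform. replace (c + sg s * (t0 + t)) with (c + sg s * t0 + sg s * t) by ring. auto. Qed.

Lemma Mform_fst k s c t : fst (Mform k s c t) = c + sg s * t.
Proof. auto. Qed.


Lemma turn_fw_r1 k g t : (3 <= k)%nat -> Germs k g -> (forall u, Lambda k (g u)) -> fst (g t) = r1 k ->
  exists e c, 0 < e /\ on k false c g t (t + e) /\ c - t = r1 k.
Proof.
  intros hk [Gf _] HL Ht. destruct (Gf t) as [e [He [s [c H]]]].
  pose proof (H t ltac:(lra)) as A. rewrite A in Ht. simpl in Ht.
  destruct s.
  - exfalso. pose proof (H (t + e) ltac:(lra)) as B. destruct (HL (t + e)) as [Hx _].
    rewrite B in Hx. simpl in Hx, Ht. lra.
  - exists e, c. simpl in Ht. split; auto. split; auto. lra.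
Qed.

Lemma turn_fw_r0 k g t : (3 <= k)%nat -> Germs k g -> (forall u, Lambda k (g u)) -> fst (g t) = r0 k ->
  exists e c, 0 < e /\ on k true c g t (t + e) /\ c + t = r0 k.
Proof.
  intros hk [Gf _] HL Ht. destruct (Gf t) as [e [He [s [c H]]]].
  pose proof (H t ltac:(lra)) as A. rewrite A in Ht. simpl in Ht.
  destruct s.
  - exists e, c. simpl in Ht. split; auto. split; auto. lra.
  - exfalso. pose proof (H (t + e) ltac:(lra)) as B. destruct (HL (t + e)) as [Hx _].
    rewrite B in Hx. simpl in Hx, Ht. lra.
Qed.

Lemma turn_bw_r1 k g t : (3 <= k)%nat -> Germs k g -> (forall u, Lambda k (g u)) -> fst (g t) = r1 k ->
  exists e c, 0 < e /\ on k true c g (t - e) t /\ c + t = r1 k.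
Proof.
  intros hk [_ Gb] HL Ht. destruct (Gb t) as [e [He [s [c H]]]].
  pose proof (H t ltac:(lra)) as A. rewrite A in Ht. simpl in Ht.
  destruct s.
  - exists e, c. simpl in Ht. split; auto. split; auto. lra.
  - exfalso. pose proof (H (t - e) ltac:(lra)) as B. destruct (HL (t - e)) as [Hx _].
    rewrite B in Hx. simpl in Hx, Ht. lra.
Qed.

Lemma turn_bw_r0 k g t : (3 <= k)%nat -> Germs k g -> (forall u, Lambda k (g u)) -> fst (g t) = r0 k ->
  exists e c, 0 < e /\ on k false c g (t - e) t /\ c - t = r0 k.
Proof.
  intros hk [_ Gb] HL Ht. destruct (Gb t) as [e [He [s [c H]]]].
  pose proof (H t ltac:(lra)) as A. rewrite A in Ht. simpl in Ht.
  destruct s.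
  - exfalso. pose proof (H (t - e) ltac:(lra)) as B. destruct (HL (t - e)) as [Hx _].
    rewrite B in Hx. simpl in Hx, Ht. lra.
  - exists e, c. simpl in Ht. split; auto. split; auto. lra.
Qed.

Lemma step_fw k g t0 l : (3 <= k)%nat -> Germs k g -> (forall u, Lambda k (g u)) ->
  (1 <= l <= k - 1)%nat -> g t0 = (pj k l, 0) ->
  exists n, (n <= 2 * k - 3)%nat /\ arc_start k n = l /\ forall t, 0 <= t <= 1 -> g (t0 + t) = Arc k n t.
Proof.
  intros hk Gs HL Hl Ht0. pose proof Gs as [Gf Gb].
  pose proof (pj_1 k) as P1. pose proof (pj_km1 k ltac:(lia)) as P2.
  destruct (Gf t0) as [e [He [s [c H]]]].
  assert (Hc : c + sg s * t0 = pj k l).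
  { pose proof (H t0 ltac:(lra)) as A. rewrite Ht0 in A. unfold Mform in A. injection A; auto. }
  destruct s; simpl sg in Hc.
  - destruct (Nat.le_gt_cases l (k - 2)).
    + exists (2 * l - 1)%nat. split. lia. split. apply (arcU k l 0); auto; lia.
      assert (Hon : on k true c g t0 (t0 + 1)).
      { apply cont_fw; auto. lra. exists e; auto. intros tau Htau. simpl sg.
        replace (c + 1 * (t0 + tau)) with (pj k l + tau) by lra. apply pos_U; auto; try lia; lra. }
      intros t Ht. rewrite Hon by lra. rewrite Mform_tr. simpl sg. rewrite Hc. symmetry. apply arcU; auto; lia.
    + assert (l = (k - 1)%nat) by lia. subst l.
      assert (Hon1 : on k true c g t0 (t0 + /2)).
      { apply cont_fw; auto. lra. exists e; auto. intros tau Htau. simpl sg.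
        replace (c + 1 * (t0 + tau)) with (r1 k - (/2 - tau)) by lra. apply pos_R; auto; lra. }
      assert (Hx1 : fst (g (t0 + /2)) = r1 k) by (rewrite Hon1 by lra; simpl; lra).
      destruct (turn_fw_r1 k g (t0 + /2) hk Gs HL Hx1) as [e' [c' [He' [H' Hc']]]].
      assert (Hon2 : on k false c' g (t0 + /2) (t0 + /2 + /2)).
      { apply cont_fw; auto. lra. exists e'; auto. intros tau Htau. simpl sg.
        replace (c' + -1 * (t0 + /2 + tau)) with (r1 k - tau) by lra. apply pos_R; auto; lra. }
      exists (2 * k - 3)%nat. split. lia. split. apply (arcR k 0); auto.
      intros t Ht. destruct (Rle_dec t (/2)).
      * rewrite Hon1 by lra. rewrite Mform_tr. simpl sg. rewrite Hc. symmetry; apply (arcR k t); auto.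
      * rewrite Hon2 by lra. rewrite Mform_tr. simpl sg.
        replace (c' + -1 * t0) with (pj k (k - 1) + 1) by lra. symmetry; apply (arcR k t); auto; lra.
  - destruct (Nat.le_gt_cases 2 l).
    + exists (2 * (l - 1))%nat. split. lia.
      pose proof (arcD k (l - 1) 0 hk ltac:(lia)) as [_ [S1 _]].
      replace (S (l - 1)) with l in S1 by lia. split. auto.
      assert (Hon : on k false c g t0 (t0 + 1)).
      { apply cont_fw; auto. lra. exists e; auto. intros tau Htau. simpl sg.
        replace (c + -1 * (t0 + tau)) with (pj k (l - 1) + (1 - tau)).
        apply pos_U; auto; try lia; lra. replace l with (S (l - 1)) in Hc by lia. rewrite pj_S in Hc. lra. }
      intros t Ht. rewrite Hon by lra. rewrite Mform_tr. simpl sg. rewrite Hc.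
      pose proof (arcD k (l - 1) t hk ltac:(lia)) as [A _]. replace (S (l - 1)) with l in A by lia.
      rewrite A; auto.
    + assert (l = 1%nat) by lia. subst l.
      assert (Hon1 : on k false c g t0 (t0 + /2)).
      { apply cont_fw; auto. lra. exists e; auto. intros tau Htau. simpl sg.
        replace (c + -1 * (t0 + tau)) with (r0 k + (/2 - tau)) by lra. apply pos_L; auto; lra. }
      assert (Hx1 : fst (g (t0 + /2)) = r0 k) by (rewrite Hon1 by lra; simpl; lra).
      destruct (turn_fw_r0 k g (t0 + /2) hk Gs HL Hx1) as [e' [c' [He' [H' Hc']]]].
      assert (Hon2 : on k true c' g (t0 + /2) (t0 + /2 + /2)).
      { apply cont_fw; auto. lra. exists e'; auto. intros tau Htau. simpl sg.
        replace (c' + 1 * (t0 + /2 + tau)) with (r0 k + tau) by lra. apply pos_L; auto; lra. }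
      exists 0%nat. split. lia. split. apply (arcL k 0); auto.
      intros t Ht. destruct (Rle_dec t (/2)).
      * rewrite Hon1 by lra. rewrite Mform_tr. simpl sg. rewrite Hc. symmetry; apply (arcL k t); auto.
      * rewrite Hon2 by lra. rewrite Mform_tr. simpl sg.
        replace (c' + 1 * t0) with (pj k 1 - 1) by lra. symmetry; apply (arcL k t); auto; lra.
Qed.

Lemma step_bw k g t0 l : (3 <= k)%nat -> Germs k g -> (forall u, Lambda k (g u)) ->
  (1 <= l <= k - 1)%nat -> g t0 = (pj k l, 0) ->
  exists n, (n <= 2 * k - 3)%nat /\ arc_end k n = l /\ forall t, 0 <= t <= 1 -> g (t0 - 1 + t) = Arc k n t.
Proof.
  intros hk Gs HL Hl Ht0. pose proof Gs as [Gf Gb].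
  pose proof (pj_1 k) as P1. pose proof (pj_km1 k ltac:(lia)) as P2.
  destruct (Gb t0) as [e [He [s [c H]]]].
  assert (Hc : c + sg s * t0 = pj k l).
  { pose proof (H t0 ltac:(lra)) as A. rewrite Ht0 in A. unfold Mform in A. injection A; auto. }
  destruct s; simpl sg in Hc.
  - destruct (Nat.le_gt_cases 2 l).
    + exists (2 * (l - 1) - 1)%nat. split. lia.
      pose proof (arcU k (l - 1) 0 hk ltac:(lia)) as [_ [_ S1]].
      replace (S (l - 1)) with l in S1 by lia. split. auto.
      assert (Hon : on k true c g (t0 - 1) t0).
      { apply cont_bw; auto. lra. exists e; auto. intros tau Htau. simpl sg.
        replace (c + 1 * (t0 - tau)) with (pj k (l - 1) + (1 - tau)).
        apply pos_U; auto; try lia; lra. replace l with (S (l - 1)) in Hc by lia. rewrite pj_S in Hc. lra. }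
      intros t Ht. rewrite Hon by lra. rewrite Mform_tr. simpl sg.
      replace (c + 1 * (t0 - 1)) with (pj k (l - 1)).
      pose proof (arcU k (l - 1) t hk ltac:(lia)) as [A _]. rewrite A; auto.
      replace l with (S (l - 1)) in Hc by lia. rewrite pj_S in Hc. lra.
    + assert (l = 1%nat) by lia. subst l.
      assert (Hon1 : on k true c g (t0 - /2) t0).
      { apply cont_bw; auto. lra. exists e; auto. intros tau Htau. simpl sg.
        replace (c + 1 * (t0 - tau)) with (r0 k + (/2 - tau)) by lra. apply pos_L; auto; lra. }
      assert (Hx1 : fst (g (t0 - /2)) = r0 k) by (rewrite Hon1 by lra; simpl; lra).
      destruct (turn_bw_r0 k g (t0 - /2) hk Gs HL Hx1) as [e' [c' [He' [H' Hc']]]].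
      assert (Hon2 : on k false c' g (t0 - /2 - /2) (t0 - /2)).
      { apply cont_bw; auto. lra. exists e'; auto. intros tau Htau. simpl sg.
        replace (c' + -1 * (t0 - /2 - tau)) with (r0 k + tau) by lra. apply pos_L; auto; lra. }
      exists 0%nat. split. lia. split. apply (arcL k 0); auto.
      intros t Ht. destruct (Rle_dec t (/2)).
      * rewrite Hon2 by lra. rewrite Mform_tr. simpl sg.
        replace (c' + -1 * (t0 - 1)) with (pj k 1) by lra. symmetry; apply (arcL k t); auto.
      * rewrite Hon1 by lra. rewrite Mform_tr. simpl sg.
        replace (c + 1 * (t0 - 1)) with (pj k 1 - 1) by lra. symmetry; apply (arcL k t); auto; lra.
  - destruct (Nat.le_gt_cases l (k - 2)).
    + exists (2 * l)%nat. split. lia. split. apply (arcD k l 0); auto; lia.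
      assert (Hon : on k false c g (t0 - 1) t0).
      { apply cont_bw; auto. lra. exists e; auto. intros tau Htau. simpl sg.
        replace (c + -1 * (t0 - tau)) with (pj k l + tau) by lra. apply pos_U; auto; try lia; lra. }
      intros t Ht. rewrite Hon by lra. rewrite Mform_tr. simpl sg.
      replace (c + -1 * (t0 - 1)) with (pj k (S l)) by (rewrite pj_S; lra).
      symmetry. apply arcD; auto; lia.
    + assert (l = (k - 1)%nat) by lia. subst l.
      assert (Hon1 : on k false c g (t0 - /2) t0).
      { apply cont_bw; auto. lra. exists e; auto. intros tau Htau. simpl sg.
        replace (c + -1 * (t0 - tau)) with (r1 k - (/2 - tau)) by lra. apply pos_R; auto; lra. }
      assert (Hx1 : fst (g (t0 - /2)) = r1 k) by (rewrite Hon1 by lra; simpl; lra).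
      destruct (turn_bw_r1 k g (t0 - /2) hk Gs HL Hx1) as [e' [c' [He' [H' Hc']]]].
      assert (Hon2 : on k true c' g (t0 - /2 - /2) (t0 - /2)).
      { apply cont_bw; auto. lra. exists e'; auto. intros tau Htau. simpl sg.
        replace (c' + 1 * (t0 - /2 - tau)) with (r1 k - tau) by lra. apply pos_R; auto; lra. }
      exists (2 * k - 3)%nat. split. lia. split. apply (arcR k 0); auto.
      intros t Ht. destruct (Rle_dec t (/2)).
      * rewrite Hon2 by lra. rewrite Mform_tr. simpl sg.
        replace (c' + 1 * (t0 - 1)) with (pj k (k - 1)) by lra. symmetry; apply (arcR k t); auto.
      * rewrite Hon1 by lra. rewrite Mform_tr. simpl sg.
        replace (c + -1 * (t0 - 1)) with (pj k (k - 1) + 1) by lra. symmetry; apply (arcR k t); auto; lra.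
Qed.

Lemma floor_nat a : 0 <= a -> exists l : nat, INR l <= a < INR l + 1.
Proof. intros H. destruct (nfloor_ex a H) as [l Hl]. exists l; auto. Qed.

Lemma phase k g : (3 <= k)%nat -> Germs k g -> (forall u, Lambda k (g u)) ->
  exists th, 0 <= th < 1 /\ exists l, (1 <= l <= k - 1)%nat /\ g (- th) = (pj k l, 0).
Proof.
  intros hk Gs HL. pose proof Gs as [Gf Gb].
  pose proof (pj_1 k) as P1. pose proof (pj_km1 k ltac:(lia)) as P2.
  pose proof (r0_eq k) as R0. pose proof (r1_ge1 k hk) as R1.
  pose proof (INR_ge3 k hk) as K3.
  assert (PJ1 : pj k 1 = 1 - INR k / 2) by (unfold pj; simpl; ring).
  assert (RR1 : r1 k = (INR k - 1) / 2) by auto.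
  destruct (g 0) as [x0 y0] eqn:E0.
  pose proof (HL 0) as L0. rewrite E0 in L0. destruct L0 as [Hx0 Hy0]; simpl in Hx0, Hy0.
  destruct (classic (exists l, (1 <= l <= k - 1)%nat /\ x0 = pj k l)) as [[l [Hl ->]]|Nt].
  { exists 0. split. lra. exists l. split; auto. rewrite Ropp_0, E0. f_equal.
    rewrite Pk_pj in Hy0 by auto. lra. }
  assert (Nt' : forall l, (1 <= l <= k - 1)%nat -> x0 <> pj k l) by (intros l Hl E; apply Nt; eauto).
  destruct (Gb 0) as [e [He [s [c H]]]].
  assert (Hc : c = x0).
  { pose proof (H 0 ltac:(lra)) as A. rewrite E0 in A. unfold Mform in A. injection A as A _. lra. }
  subst c.
  destruct s.
  -
    assert (Hr0 : r0 k < x0).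
    { destruct (Rle_or_lt x0 (r0 k)); auto. exfalso.
      pose proof (H (- e) ltac:(lra)) as A. destruct (HL (- e)) as [Hx _]. rewrite A in Hx. simpl in Hx. lra. }
    destruct (Rlt_or_le x0 (pj k 1)) as [Hlt1|Hge1].
    + assert (Hon : on k true x0 g (0 - (x0 - r0 k)) 0).
      { apply cont_bw; auto. lra. exists e; auto. intros tau Htau. simpl sg.
        replace (x0 + 1 * (0 - tau)) with (r0 k + (x0 - r0 k - tau)) by ring. apply pos_L; auto; lra. }
      set (t1 := 0 - (x0 - r0 k)).
      assert (Hx1 : fst (g t1) = r0 k) by (unfold t1; rewrite Hon by lra; simpl; lra).
      destruct (turn_bw_r0 k g t1 hk Gs HL Hx1) as [e' [c' [He' [H' Hc']]]].
      assert (Hon2 : on k false c' g (t1 - /2) t1).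
      { apply cont_bw; auto. lra. exists e'; auto. intros tau Htau. simpl sg.
        replace (c' + -1 * (t1 - tau)) with (r0 k + tau) by lra. apply pos_L; auto; lra. }
      exists (x0 - r0 k + /2). split. lra. exists 1%nat. split. lia.
      replace (- (x0 - r0 k + /2)) with (t1 - /2) by (unfold t1; ring).
      rewrite Hon2 by lra. unfold Mform; simpl sg.
      replace (c' + -1 * (t1 - /2)) with (pj k 1) by lra. rewrite Pk_pj by lia. f_equal; ring.
    + assert (Hne1 : x0 <> pj k 1) by (apply Nt'; lia).
      destruct (floor_nat (x0 + INR k / 2)) as [l Hl]. lra.
      assert (Hpl : pj k l <= x0 < pj k l + 1) by (unfold pj; lra).
      assert (l1 : (1 <= l)%nat).
      { destruct l. simpl in Hl. lra. lia. }
      assert (l2 : (l <= k - 1)%nat).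
      { assert (Hq : INR l < INR k) by (unfold r1 in Hx0; lra). apply INR_lt in Hq. lia. }
      assert (Hlt : pj k l < x0) by (destruct Hpl as [[|] _]; auto; exfalso; apply (Nt' l); auto; lia).
      assert (Hon : on k true x0 g (0 - (x0 - pj k l)) 0).
      { apply cont_bw; auto. lra. exists e; auto. intros tau Htau. simpl sg.
        replace (x0 + 1 * (0 - tau)) with (x0 - tau) by ring.
        pose proof (pj_bounds k l ltac:(lia)).
        apply Pk_pos. lra. intros i _. apply (between_not_pj k l). rewrite pj_S; lra. }
      exists (x0 - pj k l). split. lra. exists l. split. lia.
      replace (- (x0 - pj k l)) with (0 - (x0 - pj k l)) by ring.
      rewrite Hon by lra. unfold Mform; simpl sg.
      replace (x0 + 1 * (0 - (x0 - pj k l))) with (pj k l) by ring. rewrite Pk_pj by lia. f_equal; ring.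
  -
    assert (Hr1 : x0 < r1 k).
    { destruct (Rle_or_lt (r1 k) x0); auto. exfalso.
      pose proof (H (- e) ltac:(lra)) as A. destruct (HL (- e)) as [Hx _]. rewrite A in Hx. simpl in Hx. lra. }
    destruct (Rlt_or_le (pj k (k - 1)) x0).
    + assert (Hon : on k false x0 g (0 - (r1 k - x0)) 0).
      { apply cont_bw; auto. lra. exists e; auto. intros tau Htau. simpl sg.
        replace (x0 + -1 * (0 - tau)) with (r1 k - (r1 k - x0 - tau)) by ring. apply pos_R; auto; lra. }
      set (t1 := 0 - (r1 k - x0)).
      assert (Hx1 : fst (g t1) = r1 k) by (unfold t1; rewrite Hon by lra; simpl; lra).
      destruct (turn_bw_r1 k g t1 hk Gs HL Hx1) as [e' [c' [He' [H' Hc']]]].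
      assert (Hon2 : on k true c' g (t1 - /2) t1).
      { apply cont_bw; auto. lra. exists e'; auto. intros tau Htau. simpl sg.
        replace (c' + 1 * (t1 - tau)) with (r1 k - tau) by lra. apply pos_R; auto; lra. }
      exists (r1 k - x0 + /2). split. lra. exists (k - 1)%nat. split. lia.
      replace (- (r1 k - x0 + /2)) with (t1 - /2) by (unfold t1; ring).
      rewrite Hon2 by lra. unfold Mform; simpl sg.
      replace (c' + 1 * (t1 - /2)) with (pj k (k - 1)) by lra. rewrite Pk_pj by lia. f_equal; ring.
    + assert (Hne1 : x0 <> pj k (k - 1)) by (apply Nt'; lia).
      destruct (floor_nat (x0 + INR k / 2)) as [l Hl]. unfold r0 in Hx0; lra.
      assert (Hpl : pj k l <= x0 < pj k l + 1) by (unfold pj; lra).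
      assert (Hlt : pj k l < x0).
      { destruct Hpl as [[|] _]; auto. exfalso. destruct l.
        - unfold pj in *; simpl in *. unfold r0 in Hx0. lra.
        - apply (Nt' (S l)); auto. split. lia.
          assert (Hq1 : pj k (S l) < pj k (k - 1)) by lra. unfold pj in Hq1.
          assert (Hq2 : INR (S l) < INR (k - 1)) by lra. apply INR_lt in Hq2. lia. }
      assert (l2 : (S l <= k - 1)%nat).
      { assert (Hq1 : pj k l < pj k (k - 1)) by lra. unfold pj in Hq1.
        assert (Hq2 : INR l < INR (k - 1)) by lra. apply INR_lt in Hq2. lia. }
      assert (Hon : on k false x0 g (0 - (pj k (S l) - x0)) 0).
      { apply cont_bw; auto. rewrite pj_S; lra. exists e; auto. intros tau Htau. simpl sg.
        replace (x0 + -1 * (0 - tau)) with (x0 + tau) by ring.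
        pose proof (pj_bounds k (S l) ltac:(lia)).
        apply Pk_pos. lra. intros i _. apply (between_not_pj k l). rewrite pj_S in *; lra. }
      exists (pj k (S l) - x0). split. rewrite pj_S; lra. exists (S l). split. lia.
      replace (- (pj k (S l) - x0)) with (0 - (pj k (S l) - x0)) by ring.
      rewrite Hon by (rewrite pj_S; lra). unfold Mform; simpl sg.
      replace (x0 + -1 * (0 - (pj k (S l) - x0))) with (pj k (S l)) by ring. rewrite Pk_pj by lia. f_equal; ring.
Qed.

Definition TangAt k (g : R -> pt) t := exists l, (1 <= l <= k - 1)%nat /\ g t = (pj k l, 0).

Lemma tang_all k g t0 : (3 <= k)%nat -> Germs k g -> (forall u, Lambda k (g u)) ->
  TangAt k g t0 -> forall m : Z, TangAt k g (t0 + IZR m).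
Proof.
  intros hk Gs HL T0.
  assert (Fw : forall p : nat, TangAt k g (t0 + INR p)).
  { induction p. simpl. rewrite Rplus_0_r; auto.
    destruct IHp as [l [Hl E]].
    destruct (step_fw k g _ l hk Gs HL Hl E) as [n [Hn [_ Hf]]].
    exists (arc_end k n). split. apply (start_end_range k n hk Hn).
    rewrite S_INR, <- Rplus_assoc, Hf by lra. apply Arc_1; auto. }
  assert (Bw : forall p : nat, TangAt k g (t0 - INR p)).
  { induction p. simpl. rewrite Rminus_0_r; auto.
    destruct IHp as [l [Hl E]].
    destruct (step_bw k g _ l hk Gs HL Hl E) as [n [Hn [_ Hf]]].
    exists (arc_start k n). split. apply (start_end_range k n hk Hn).
    replace (t0 - INR (S p)) with (t0 - INR p - 1 + 0) by (rewrite S_INR; ring).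
    rewrite Hf by lra. apply Arc_0; auto. }
  intros m. destruct (Z_le_gt_dec 0 m).
  - replace m with (Z.of_nat (Z.to_nat m)) by (apply Z2Nat.id; lia). rewrite <- INR_IZR_INZ. apply Fw.
  - replace (t0 + IZR m) with (t0 - INR (Z.to_nat (- m))).
    apply Bw. rewrite INR_IZR_INZ, Z2Nat.id by lia. rewrite opp_IZR. ring.
Qed.

Lemma structure k g : (3 <= k)%nat -> Germs k g -> (forall u, Lambda k (g u)) ->
  exists th, 0 <= th < 1 /\ exists n : Z -> nat,
    (forall m, (n m <= 2 * k - 3)%nat) /\
    (forall m, arc_end k (n m) = arc_start k (n (m + 1)%Z)) /\
    (forall m t, 0 <= t <= 1 -> g (- th + IZR m + t) = Arc k (n m) t).
Proof.
  intros hk Gs HL.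
  destruct (phase k g hk Gs HL) as [th [Hth T0]].
  exists th; split; auto.
  set (P := fun m n => (n <= 2 * k - 3)%nat /\ forall t, 0 <= t <= 1 -> g (- th + IZR m + t) = Arc k n t).
  assert (Ex : forall m, exists n, P m n).
  { intros m. destruct (tang_all k g (- th) hk Gs HL T0 m) as [l [Hl E]].
    destruct (step_fw k g _ l hk Gs HL Hl E) as [n [Hn [_ Hf]]]. exists n; unfold P; split; [exact Hn|exact Hf]. }
  exists (fun m => epsilon (inhabits 0%nat) (P m)).
  assert (Sp : forall m, P m (epsilon (inhabits 0%nat) (P m))) by (intros; apply epsilon_spec; auto).
  split; [|split].
  - intros m; apply (Sp m).
  - intros m. destruct (Sp m) as [Hn1 F1]. destruct (Sp (m + 1)%Z) as [Hn2 F2].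
    pose proof (F1 1 ltac:(lra)) as A1. pose proof (F2 0 ltac:(lra)) as A2.
    rewrite plus_IZR in A2. replace (- th + (IZR m + 1) + 0) with (- th + IZR m + 1) in A2 by ring.
    rewrite A1 in A2. rewrite (Arc_1 k), (Arc_0 k) in A2 by auto. injection A2 as A2. apply (pj_inj k); auto.
  - intros m t Ht. apply (Sp m); auto.
Qed.

Lemma itin_of k g th n : (3 <= k)%nat -> 0 <= th < 1 -> (forall m, (n m <= 2 * k - 3)%nat) ->
  (forall m t, 0 <= t <= 1 -> g (- th + IZR m + t) = Arc k (n m) t) ->
  itin k g = n.
Proof.
  intros hk Hth Hn Hg. apply FunctionalExtensionality.functional_extensionality. intros j.
  assert (Uq : forall n', itin_at k g j n' -> n' = n j).
  { intros n' H. destruct (Req_dec th 0) as [E|E].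
    - subst th. assert (Tj : IsTangPt k (g (IZR j))).
      { replace (IZR j) with (- 0 + IZR j + 0) by ring. rewrite Hg by lra. rewrite Arc_0 by auto.
        exists (arc_start k (n j)). split; auto. apply (start_end_range k (n j) hk (Hn j)). }
      destruct H as [H|[_ H]].
      + exfalso; eapply InArc_not_tang; eauto.
      + replace (IZR j + / 2) with (- 0 + IZR j + /2) in H by ring. rewrite Hg in H by lra.
        symmetry. apply (InArc_unique k (n j) n' (Arc k (n j) (/2)) hk); auto. apply Arc_in; auto; lra.
    - assert (Ij : InArc k (n j) (g (IZR j))).
      { replace (IZR j) with (- th + IZR j + th) by ring. rewrite Hg by lra. apply Arc_in; auto; lra. }
      destruct H as [H|[T _]].
      + apply (InArc_unique k n' (n j) (g (IZR j)) hk); auto.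
      + exfalso; eapply InArc_not_tang; eauto. }
  apply Uq. unfold itin. apply epsilon_spec. exists (n j).
  destruct (Req_dec th 0) as [E|E].
  - subst th. right. split.
    + replace (IZR j) with (- 0 + IZR j + 0) by ring. rewrite Hg by lra. rewrite Arc_0 by auto.
      exists (arc_start k (n j)). split; auto. apply (start_end_range k (n j) hk (Hn j)).
    + replace (IZR j + / 2) with (- 0 + IZR j + /2) by ring. rewrite Hg by lra. apply Arc_in; auto; lra.
  - left. replace (IZR j) with (- th + IZR j + th) by ring. rewrite Hg by lra. apply Arc_in; auto; lra.
Qed.

Lemma Mform_derive k s C u :
  is_derive (fun t => Mform k s C t) u (Wk k s (Mform k s C u)).
Proof.
  rewrite Wk_eq. unfold Mform at 2. simpl fst.
  unfold Mform. apply is_derive_pair'.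
  - auto_derive; auto. ring.
  - auto_derive. apply (Pk_ex_derive k). change (fun x : R => Pk k x) with (Pk k). destruct s; simpl; ring.
Qed.

Lemma LT k s C t1 t2 : t1 < t2 ->
  (forall t, t1 <= t <= t2 -> 0 <= Pk k (C + sg s * t)) ->
  0 < Pk k (C + sg s * ((t1 + t2) / 2)) ->
  exists p s0 a b phi, local_traj (Xk k) (Yk k) p a b phi /\ a <= t1 - s0 /\ t2 - s0 <= b /\
    forall t, t1 <= t <= t2 -> Mform k s C t = phi (t - s0).
Proof.
  intros H12 Hnn Hmid.
  set (s0 := (t1 + t2) / 2).
  set (phi := fun u => Mform k s C (u + s0)).
  exists (phi 0), s0, (t1 - s0), (t2 - s0), phi.
  assert (Ephi : forall u, phi u = Mform k s (C + sg s * s0) u).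
  { intros u. unfold phi. rewrite Rplus_comm. apply Mform_tr. }
  assert (Dphi : forall u, is_derive phi u (Wk k s (phi u))).
  { intros u. rewrite Ephi. apply (is_derive_ext (fun t => Mform k s (C + sg s * s0) t)).
    intros; rewrite Ephi; auto. apply Mform_derive. }
  assert (IC : int_curve (Wk k s) (t1 - s0) (t2 - s0) phi).
  { split. unfold s0; lra. split.
    - apply continuous_on_forall. intros u _.
      apply (@ex_derive_continuous R_AbsRing (prod_NormedModule R_AbsRing R_NormedModule R_NormedModule)).
      eexists. apply Dphi.
    - intros u _. apply Dphi. }
  split; [|split; [lra|split; [lra|]]].
  - assert (Pm : 0 < Pk k (C + sg s * s0)) by exact Hmid.
    assert (P0 : snd (phi 0) = sg s * Pk k (C + sg s * s0)) by (unfold phi; rewrite Rplus_0_l; reflexivity).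
    split. unfold s0; lra. split; auto.
    destruct s; simpl sg in *.
    + left. split.
      * rewrite P0. lra.
      * split; auto. intros u Hu. unfold SigmaPlus, phi, Mform; simpl.
        apply Rle_ge. rewrite Rmult_1_l. apply (Hnn (u + s0)). lra.
    + right; left. split.
      * rewrite P0. lra.
      * split; auto. intros u Hu. unfold SigmaMinus, phi, Mform; simpl.
        pose proof (Hnn (u + s0) ltac:(lra)). simpl in H. lra.
  - intros t Ht. unfold phi. f_equal. ring.
Qed.

Lemma Arc_pos k n t : (3 <= k)%nat -> (n <= 2 * k - 3)%nat -> 0 < t < 1 -> t <> /2 ->
  0 < Pk k (fst (Arc k n t)).
Proof.
  intros hk hn Ht Ht2. pose proof (pj_1 k) as P1. pose proof (pj_km1 k ltac:(lia)) as P2.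
  destruct (Rle_dec t (/2)).
  - rewrite Arc_lo by auto.
    destruct (kind k n hk hn) as [[E0 [E1 _]]|[[E0 [E1 _]]|[[j [Hj [E0 [E1 _]]]]|[j [Hj [E0 [E1 _]]]]]]];
      rewrite E1; rewrite Mform_fst; simpl fst; simpl snd; simpl sg.
    + replace (pj k 1 + -1 * t) with (r0 k + (/2 - t)) by lra. apply pos_L; auto; lra.
    + replace (pj k (k - 1) + 1 * t) with (r1 k - (/2 - t)) by lra. apply pos_R; auto; lra.
    + rewrite Rmult_1_l. apply pos_U; auto; lra.
    + replace (pj k (S j) + -1 * t) with (pj k j + (1 - t)) by (rewrite pj_S; ring). apply pos_U; auto; lra.
  - rewrite Arc_hi by (auto; lra).
    destruct (kind k n hk hn) as [[E0 [_ [E1 _]]]|[[E0 [_ [E1 _]]]|[[j [Hj [E0 [_ [E1 _]]]]]|[j [Hj [E0 [_ [E1 _]]]]]]]];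
      rewrite E1; rewrite Mform_fst; simpl fst; simpl snd; simpl sg.
    + replace (pj k 1 - 1 + 1 * t) with (r0 k + (t - /2)) by lra. apply pos_L; auto; lra.
    + replace (pj k (k - 1) + 1 + -1 * t) with (r1 k - (t - /2)) by lra. apply pos_R; auto; lra.
    + rewrite Rmult_1_l. apply pos_U; auto; lra.
    + replace (pj k (S j) + -1 * t) with (pj k j + (1 - t)) by (rewrite pj_S; ring). apply pos_U; auto; lra.
Qed.

Definition Adm k (a : Z -> nat) :=
  (forall m, (a m <= 2 * k - 3)%nat) /\ (forall m, arc_end k (a m) = arc_start k (a (m + 1)%Z)).

Definition build k (a : Z -> nat) : R -> pt := fun t => Arc k (a (Zfloor t)) (t - IZR (Zfloor t)).

Lemma build_on k a : (3 <= k)%nat -> Adm k a ->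
  forall m t, 0 <= t <= 1 -> build k a (IZR m + t) = Arc k (a m) t.
Proof.
  intros hk [Ha Hc] m t Ht. unfold build.
  destruct (Req_dec t 1) as [->|ne].
  - rewrite <- plus_IZR, ZfloorZ. replace (IZR (m + 1) - IZR (m + 1)) with 0 by ring.
    rewrite Arc_0, Arc_1 by auto. rewrite Hc. auto.
  - rewrite (Zfloor_eq m) by lra. f_equal. ring.
Qed.

Lemma construct k a : (3 <= k)%nat -> Adm k a -> Omega k (build k a) /\ itin k (build k a) = a.
Proof.
  intros hk Hadm. pose proof Hadm as [Ha Hc].
  assert (Hon := build_on k a hk Hadm).
  split; [split|].
  - exists (fun i => IZR i / 2). split; [|split; [|split]].
    + intros i. rewrite plus_IZR. lra.
    + intros M. exists (Zfloor (2 * M) + 1)%Z. intros i Hi. apply IZR_le in Hi.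
      rewrite plus_IZR in Hi. pose proof (Zfloor_bound (2 * M)). lra.
    + intros M. exists (Zfloor (2 * M) - 1)%Z. intros i Hi. apply IZR_le in Hi.
      rewrite minus_IZR in Hi. pose proof (Zfloor_bound (2 * M)). lra.
    + intros i. destruct (Zeven_odd_dec i) as [Ev|Od].
      * destruct (Zeven_ex i Ev) as [m ->].
        set (s := fst (h1 k (a m))). set (c := snd (h1 k (a m))).
        assert (Eq : forall t, IZR (2 * m) / 2 <= t <= IZR (2 * m + 1) / 2 ->
                  build k a t = Mform k s (c - sg s * IZR m) t).
        { intros t Ht. rewrite mult_IZR, plus_IZR, mult_IZR in *.
          replace t with (IZR m + (t - IZR m)) at 1 by ring. rewrite Hon by lra.
          rewrite Arc_lo by lra. rewrite Mform_shift. reflexivity. }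
        destruct (LT k s (c - sg s * IZR m) (IZR (2 * m) / 2) (IZR (2 * m + 1) / 2)) as [p [s0 [a0 [b0 [phi [HT [H1 [H2 H3]]]]]]]].
        { rewrite plus_IZR. lra. }
        { intros t Ht. replace (c - sg s * IZR m + sg s * t) with (fst (build k a t)) by (rewrite (Eq t Ht); reflexivity).
          apply Pk_nonneg.
          rewrite mult_IZR, plus_IZR, mult_IZR in *.
          replace t with (IZR m + (t - IZR m)) by ring. rewrite Hon by lra. apply Arc_x_range; auto; lra. }
        { rewrite mult_IZR, plus_IZR, mult_IZR.
          replace ((2 * IZR m / 2 + (2 * IZR m + 1) / 2) / 2) with (IZR m + /4) by field.
          replace (c - sg s * IZR m + sg s * (IZR m + / 4)) with (fst (Arc k (a m) (/4))).
          apply Arc_pos; auto; lra. rewrite Arc_lo by lra. unfold Mform; simpl. fold s c. ring. }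
        exists p, s0, a0, b0, phi. split; auto. split; auto. replace (2 * m + 1)%Z with (2 * m + 1)%Z by lia.
        split; auto. intros t Ht. rewrite Eq by auto. apply H3; auto.
      * destruct (Zodd_ex i Od) as [m ->].
        set (s := fst (h2 k (a m))). set (c := snd (h2 k (a m))).
        assert (Eq : forall t, IZR (2 * m + 1) / 2 <= t <= IZR (2 * m + 1 + 1) / 2 ->
                  build k a t = Mform k s (c - sg s * IZR m) t).
        { intros t Ht. rewrite !plus_IZR, mult_IZR in *.
          replace t with (IZR m + (t - IZR m)) at 1 by ring. rewrite Hon by lra.
          rewrite Arc_hi by (auto; lra). rewrite Mform_shift. reflexivity. }
        destruct (LT k s (c - sg s * IZR m) (IZR (2 * m + 1) / 2) (IZR (2 * m + 1 + 1) / 2)) as [p [s0 [a0 [b0 [phi [HT [H1 [H2 H3]]]]]]]].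
        { rewrite !plus_IZR. lra. }
        { intros t Ht. replace (c - sg s * IZR m + sg s * t) with (fst (build k a t)) by (rewrite (Eq t Ht); reflexivity).
          apply Pk_nonneg.
          rewrite !plus_IZR, mult_IZR in *.
          replace t with (IZR m + (t - IZR m)) by ring. rewrite Hon by lra. apply Arc_x_range; auto; lra. }
        { rewrite !plus_IZR, mult_IZR.
          replace ((((2 * IZR m + 1) / 2) + (2 * IZR m + 1 + 1) / 2) / 2) with (IZR m + 3 / 4) by field.
          replace (c - sg s * IZR m + sg s * (IZR m + 3 / 4)) with (fst (Arc k (a m) (3 / 4))).
          apply Arc_pos; auto; lra. rewrite Arc_hi by (auto; lra). unfold Mform; simpl. fold s c. ring. }
        exists p, s0, a0, b0, phi. split; auto. split; auto. split; auto.
        intros t Ht. rewrite Eq by auto. apply H3; auto.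
  - pose proof (Hon 0%Z 0 ltac:(lra)) as E. replace (IZR 0 + 0) with 0 in E by (simpl; ring).
     rewrite E. apply Arc_lambda; auto; lra.
  - apply (itin_of k (build k a) 0 a hk ltac:(lra) Ha).
    intros m t Ht. replace (- 0 + IZR m + t) with (IZR m + t) by ring. apply Hon; auto.
Qed.

Lemma Omega_lambda k g : (3 <= k)%nat -> Omega k g -> forall u, Lambda k (g u).
Proof. intros hk [Hg H0] u. apply (invariance k hk g Hg H0). Qed.

Lemma Omega_struct k g : (3 <= k)%nat -> Omega k g ->
  exists th, 0 <= th < 1 /\ Adm k (itin k g) /\
    forall m t, 0 <= t <= 1 -> g (- th + IZR m + t) = Arc k (itin k g m) t.
Proof.
  intros hk HO. pose proof (Omega_lambda k g hk HO) as HL.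
  pose proof (germs_of k g hk (proj1 HO) HL) as Gs.
  destruct (structure k g hk Gs HL) as [th [Hth [n [Hn [Hc Hf]]]]].
  rewrite (itin_of k g th n hk Hth Hn Hf).
  exists th; split; auto. split; auto. split; auto.
Qed.

Lemma Omega_T1 k g : (3 <= k)%nat -> Omega k g -> Omega k (T1 g).
Proof.
  intros hk HO. split.
  - apply global_shift. apply HO.
  - unfold T1. rewrite Rplus_0_l. apply (Omega_lambda k g hk HO).
Qed.

Lemma itin_T1 k g : itin k (T1 g) = sigma_shift (itin k g).
Proof.
  apply FunctionalExtensionality.functional_extensionality. intros j.
  unfold sigma_shift, itin, itin_at, T1. rewrite plus_IZR.
  replace (IZR j + / 2 + 1) with (IZR j + 1 + / 2) by ring. reflexivity.
Qed.

Lemma rep_exists k g : (3 <= k)%nat -> Omega k g ->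
  exists g', Omega k g' /\ equiv_traj k g' g /\ IsTangPt k (g' 0).
Proof.
  intros hk HO. destruct (Omega_struct k g hk HO) as [th [Hth [[Hn Hc] Hf]]].
  set (g' := fun t => g (t + - th)).
  assert (E' : forall m t, 0 <= t <= 1 -> g' (- 0 + IZR m + t) = Arc k (itin k g m) t).
  { intros m t Ht. unfold g'. rewrite <- Hf by auto. f_equal. ring. }
  exists g'. split; [split|split].
  - apply global_shift. apply HO.
  - pose proof (E' 0%Z 0 ltac:(lra)) as E0. replace (- 0 + IZR 0 + 0) with 0 in E0 by (simpl; ring).
    rewrite E0. apply Arc_lambda; auto; lra.
  - unfold equiv_traj. apply (itin_of k g' 0 (itin k g) hk ltac:(lra) Hn E').
  - pose proof (E' 0%Z 0 ltac:(lra)) as E0. replace (- 0 + IZR 0 + 0) with 0 in E0 by (simpl; ring).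
    rewrite E0, Arc_0 by auto. exists (arc_start k (itin k g 0)). split; auto.
    apply (start_end_range k _ hk (Hn 0%Z)).
Qed.

Lemma rep_struct k g : (3 <= k)%nat -> Omega k g ->
  forall m t, 0 <= t <= 1 -> rep k g (IZR m + t) = Arc k (itin k g m) t.
Proof.
  intros hk HO.
  assert (Sp : Omega k (rep k g) /\ equiv_traj k (rep k g) g /\ IsTangPt k (rep k g 0)).
  { unfold rep. apply epsilon_spec. apply rep_exists; auto. }
  destruct Sp as [HO' [Heq HT]].
  destruct (Omega_struct k (rep k g) hk HO') as [th [Hth [[Hn Hc] Hf]]].
  unfold equiv_traj in Heq. rewrite Heq in Hf, Hn.
  assert (th = 0).
  { destruct (Req_dec th 0); auto. exfalso.
    pose proof (Hf 0%Z th ltac:(lra)) as E. replace (- th + IZR 0 + th) with 0 in E by (simpl; ring).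
    rewrite E in HT. apply (InArc_not_tang k (itin k g 0) (Arc k (itin k g 0) th) hk); auto. apply Arc_in; auto; lra. }
  subst th. intros m t Ht. rewrite <- Hf by auto. f_equal. ring.
Qed.

Lemma geom_half_series : Series (fun n => (/2) ^ n) = 2.
Proof.
  apply is_series_unique.
  assert (H := is_series_geom (/2) ltac:(rewrite Rabs_right; lra)).
  replace (/ (1 - /2)) with 2 in H by field. exact H.
Qed.

Lemma geom_half_series' : Series (pow (/2)) = 2.
Proof. exact geom_half_series. Qed.

Lemma geom_half_ex : ex_series (fun n => (/2) ^ n).
Proof. eexists. apply is_series_geom. rewrite Rabs_right; lra. Qed.

Lemma ex_geomC C : ex_series (fun n => C * (/2) ^ n).
Proof. exact (ex_series_scal_l (V := R_NormedModule) C (fun n => (/2) ^ n) geom_half_ex). Qed.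

Lemma half_pow_pos n : 0 < (/2) ^ n.
Proof. apply pow_lt; lra. Qed.

Lemma dom_ex (v : nat -> R) C : (forall n, 0 <= v n <= C * (/2) ^ n) -> ex_series v.
Proof.
  intros H. apply (ex_series_le v (fun n => C * (/2) ^ n)).
  - intros n. rewrite Rabs_right by (destruct (H n); lra). apply H.
  - apply ex_geomC.
Qed.

Lemma sum_f_nonneg v j : (forall n, 0 <= v n) -> 0 <= sum_f_R0 v j.
Proof. intros H; induction j; simpl. apply H. specialize (H (S j)). lra. Qed.

Lemma ser_ge (v : nat -> R) C : (forall n, 0 <= v n <= C * (/2) ^ n) -> forall j, v j <= Series v.
Proof.
  intros H j. pose proof (dom_ex v C H) as Ex.
  assert (L : is_lim_seq (sum_n v) (Series v)) by apply (Series_correct v Ex).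
  pose proof (is_lim_seq_incr_compare (sum_n v) (Series v) L) as C1.
  assert (v j <= sum_n v j).
  { rewrite sum_n_Reals. destruct j; simpl. lra.
    pose proof (sum_f_nonneg v j (fun n => proj1 (H n))). lra. }
  assert (sum_n v j <= Series v).
  { apply C1. intros n. rewrite !sum_n_Reals. simpl. destruct (H (S n)). lra. }
  lra.
Qed.

Lemma ser_nonneg (v : nat -> R) C : (forall n, 0 <= v n <= C * (/2) ^ n) -> 0 <= Series v.
Proof. intros H. pose proof (ser_ge v C H 0). destruct (H 0%nat). lra. Qed.

Lemma ser_tail (v : nat -> R) C N : (forall n, 0 <= v n <= C * (/2) ^ n) ->
  (forall n, (n < N)%nat -> v n = 0) -> Series v <= 2 * C * (/2) ^ N.
Proof.
  intros H Z. pose proof (dom_ex v C H) as Ex.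
  assert (C0 : 0 <= C). { destruct (H 0%nat). simpl in *. lra. }
  destruct N.
  - simpl. rewrite Rmult_1_r.
    assert (Series v <= Series (fun n => C * (/2) ^ n)).
    { apply Series_le. apply H. apply ex_geomC. }
    rewrite Series_scal_l in H0. rewrite geom_half_series' in H0. lra.
  - rewrite (Series_incr_n v (S N)) by (auto; lia). simpl pred.
    assert (E : sum_f_R0 v N = 0).
    { assert (forall m, (m <= N)%nat -> sum_f_R0 v m = 0).
      { induction m; intros Hm; simpl. apply Z; lia. rewrite IHm by lia. rewrite Z by lia. ring. }
      apply H0; lia. }
    rewrite E, Rplus_0_l.
    assert (Series (fun k => v (S N + k)%nat) <= Series (fun k => C * (/2) ^ (S N) * (/2) ^ k)).
    { apply Series_le. intros n. destruct (H (S N + n)%nat). split; auto. rewrite pow_add in H1. lra.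
      apply ex_geomC. }
    rewrite Series_scal_l in H0. rewrite ?geom_half_series, ?geom_half_series' in H0. lra.
Qed.

Lemma abs_of_nat n : Z.abs_nat (Z.of_nat n) = n.
Proof. apply Zabs2Nat.id. Qed.
Lemma abs_neg_S n : Z.abs_nat (- Z.of_nat (S n)) = S n.
Proof. lia. Qed.

Lemma sumZ_ge (u : Z -> R) C : (forall i, 0 <= u i <= C * (/2) ^ Z.abs_nat i) -> forall j, u j <= sumZ u.
Proof.
  intros H j. unfold sumZ.
  assert (H1 : forall n, 0 <= u (Z.of_nat n) <= C * (/2) ^ n).
  { intros n. pose proof (H (Z.of_nat n)) as Hn. rewrite abs_of_nat in Hn. exact Hn. }
  assert (H2 : forall n, 0 <= u (- Z.of_nat (S n))%Z <= C * (/2) ^ n).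
  { intros n. destruct (H (- Z.of_nat (S n))%Z) as [Ha Hb]. rewrite abs_neg_S in Hb. split; auto.
    replace ((/2) ^ (S n)) with (/2 * (/2) ^ n) in Hb by reflexivity.
    assert (0 <= C). { destruct (H 0%Z). simpl in *. lra. }
    pose proof (half_pow_pos n). assert (0 <= C * (/2) ^ n) by (apply Rmult_le_pos; lra). lra. }
  pose proof (ser_nonneg _ _ H1). pose proof (ser_nonneg _ _ H2).
  destruct (Z_le_gt_dec 0 j).
  - pose proof (ser_ge _ _ H1 (Z.to_nat j)) as H4. cbv beta in H4. rewrite Z2Nat.id in H4 by lia. lra.
  - pose proof (ser_ge _ _ H2 (Z.to_nat (- j - 1))) as H4. cbv beta in H4.
    replace (- Z.of_nat (S (Z.to_nat (- j - 1))))%Z with j in H4 by lia. lra.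
Qed.

Lemma sumZ_tail (u : Z -> R) C N : (forall i, 0 <= u i <= C * (/2) ^ Z.abs_nat i) ->
  (forall i, (Z.abs_nat i <= N)%nat -> u i = 0) -> sumZ u <= 4 * C * (/2) ^ N.
Proof.
  intros H Z0. unfold sumZ.
  assert (C0 : 0 <= C). { destruct (H 0%Z). simpl in *. lra. }
  assert (H1 : forall n, 0 <= u (Z.of_nat n) <= C * (/2) ^ n).
  { intros n. pose proof (H (Z.of_nat n)) as Hn. rewrite abs_of_nat in Hn. exact Hn. }
  assert (H2 : forall n, 0 <= u (- Z.of_nat (S n))%Z <= C * (/2) ^ n).
  { intros n. destruct (H (- Z.of_nat (S n))%Z) as [Ha Hb]. rewrite abs_neg_S in Hb. split; auto.
    replace ((/2) ^ (S n)) with (/2 * (/2) ^ n) in Hb by reflexivity. pose proof (half_pow_pos n). assert (0 <= C * (/2) ^ n) by (apply Rmult_le_pos; lra). lra. }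
  pose proof (ser_tail _ _ N H1) as T1. pose proof (ser_tail _ _ N H2) as T2.
  assert (Series (fun n => u (Z.of_nat n)) <= 2 * C * (/2) ^ N).
  { apply T1. intros n Hn. apply Z0. rewrite abs_of_nat. lia. }
  assert (Series (fun n => u (- Z.of_nat (S n))%Z) <= 2 * C * (/2) ^ N).
  { apply T2. intros n Hn. apply Z0. rewrite abs_neg_S. lia. }
  lra.
Qed.

Lemma small_pow e : 0 < e -> exists N : nat, (/2) ^ N < e.
Proof.
  intros He. destruct (pow_lt_1_zero (/2) ltac:(rewrite Rabs_right; lra) e He) as [N HN].
  exists N. specialize (HN N (le_n _)). rewrite Rabs_right in HN; auto.
  left; apply half_pow_pos.
Qed.

Lemma half_pow_le n m : (n <= m)%nat -> (/2) ^ m <= (/2) ^ n.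
Proof.
  intros H. replace m with (n + (m - n))%nat by lia. generalize (m - n)%nat. intros d.
  induction d. rewrite Nat.add_0_r; lra.
  replace (n + S d)%nat with (S (n + d)) by lia. simpl. pose proof (half_pow_pos (n + d)). lra.
Qed.

Lemma edist_nonneg p q : 0 <= edist p q.
Proof. apply sqrt_pos. Qed.

Lemma edist_self p : edist p p = 0.
Proof. unfold edist. replace ((fst p - fst p) ^ 2 + (snd p - snd p) ^ 2) with 0 by ring. apply sqrt_0. Qed.

Lemma edist_le p q : edist p q <= Rabs (fst p - fst q) + Rabs (snd p - snd q).
Proof.
  unfold edist. set (a := fst p - fst q). set (b := snd p - snd q).
  rewrite <- (sqrt_square (Rabs a + Rabs b)) by (pose proof (Rabs_pos a); pose proof (Rabs_pos b); lra).
  apply sqrt_le_1_alt. pose proof (Rabs_pos a); pose proof (Rabs_pos b).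
  assert (a ^ 2 = Rabs a * Rabs a) by (rewrite <- Rabs_mult; simpl; rewrite Rmult_1_r; rewrite Rabs_right; [ring|nra]).
  assert (b ^ 2 = Rabs b * Rabs b) by (rewrite <- Rabs_mult; simpl; rewrite Rmult_1_r; rewrite Rabs_right; [ring|nra]).
  nra.
Qed.

Lemma edist_pos p q : p <> q -> 0 < edist p q.
Proof.
  intros H. unfold edist. apply sqrt_lt_R0.
  destruct p as [x y], q as [x' y']; simpl.
  destruct (Req_dec x x'); destruct (Req_dec y y'); subst; try (exfalso; apply H; auto; fail).
  - assert (0 < (y - y') ^ 2) by (apply pow2_gt_0; lra). nra.
  - assert (0 < (x - x') ^ 2) by (apply pow2_gt_0; lra). nra.
  - assert (0 < (x - x') ^ 2) by (apply pow2_gt_0; lra). nra.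
Qed.

Lemma glb_facts (E : R -> Prop) r0' : E r0' -> (forall x, E x -> 0 <= x) ->
  0 <= real (Glb_Rbar E) <= r0' /\ (forall c, (forall x, E x -> c <= x) -> c <= real (Glb_Rbar E)).
Proof.
  intros He Hpos. destruct (Glb_Rbar_correct E) as [Hlb Hg].
  assert (L0 : Rbar_le 0 (Glb_Rbar E)) by (apply Hg; intros x Ex; simpl; apply Hpos; auto).
  assert (L1 : Rbar_le (Glb_Rbar E) r0') by (apply Hlb; auto).
  destruct (Glb_Rbar E) as [l| |] eqn:El; simpl in *; try contradiction.
  split. lra. intros c Hc. assert (Rbar_le c l). { apply Hg. intros x Ex. simpl. apply Hc; auto. }
  simpl in H; auto.
Qed.

Lemma lub_facts (E : R -> Prop) D : (exists x, E x) -> (forall x, E x -> 0 <= x <= D) ->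
  0 <= real (Lub_Rbar E) <= D /\ (forall x, E x -> x <= real (Lub_Rbar E)).
Proof.
  intros [x0 Hx0] Hb. destruct (Lub_Rbar_correct E) as [Hub Hl].
  assert (L0 : Rbar_le (Lub_Rbar E) D) by (apply Hl; intros x Ex; simpl; apply Hb; auto).
  assert (L1 : Rbar_le x0 (Lub_Rbar E)) by (apply Hub; auto).
  destruct (Lub_Rbar E) as [l| |] eqn:El; simpl in *; try contradiction.
  split. pose proof (Hb x0 Hx0). lra. intros x Ex. specialize (Hub x Ex). simpl in Hub. auto.
Qed.

Lemma dist_facts p (B : pt -> Prop) b0 : B b0 ->
  0 <= dist_pt_set p B /\ (forall b, B b -> dist_pt_set p B <= edist p b) /\
  (forall c, (forall b, B b -> c <= edist p b) -> c <= dist_pt_set p B).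
Proof.
  intros Hb0. unfold dist_pt_set.
  assert (E0 : (fun r => exists b, B b /\ r = edist p b) (edist p b0)) by (exists b0; auto).
  assert (Hp : forall x, (fun r => exists b, B b /\ r = edist p b) x -> 0 <= x).
  { intros x [b [_ ->]]. apply edist_nonneg. }
  destruct (glb_facts _ _ E0 Hp) as [[G0 _] G1].
  split; auto. split.
  - intros b Hb. assert (Eb : (fun r => exists b, B b /\ r = edist p b) (edist p b)) by (exists b; auto).
    destruct (glb_facts _ _ Eb Hp) as [[_ G2] _]. auto.
  - intros c Hc. apply G1. intros x [b [Hb ->]]. auto.
Qed.

Lemma dist_self p (B : pt -> Prop) : B p -> dist_pt_set p B = 0.
Proof.
  intros Hp. destruct (dist_facts p B p Hp) as [H0 [H1 _]]. specialize (H1 p Hp).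
  rewrite edist_self in H1. lra.
Qed.

Lemma hausdorff_facts (A B : pt -> Prop) a0 b0 D : A a0 -> B b0 ->
  (forall a b, A a -> B b -> edist a b <= D) ->
  0 <= hausdorff A B <= D /\ (forall a, A a -> dist_pt_set a B <= hausdorff A B).
Proof.
  intros Ha0 Hb0 HD. unfold hausdorff.
  assert (HA : forall x, (fun r => exists a, A a /\ r = dist_pt_set a B) x -> 0 <= x <= D).
  { intros x [a [Ha ->]]. destruct (dist_facts a B b0 Hb0) as [P0 [P1 _]].
    split; auto. specialize (P1 b0 Hb0). specialize (HD a b0 Ha Hb0). lra. }
  assert (HB : forall x, (fun r => exists b, B b /\ r = dist_pt_set b A) x -> 0 <= x <= D).
  { intros x [b [Hb ->]]. destruct (dist_facts b A a0 Ha0) as [P0 [P1 _]].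
    split; auto. specialize (P1 a0 Ha0). specialize (HD a0 b Ha0 Hb).
    assert (edist b a0 = edist a0 b) by (unfold edist; f_equal; ring). lra. }
  destruct (lub_facts _ D (ex_intro _ _ (ex_intro _ a0 (conj Ha0 eq_refl))) HA) as [[L0 L1] L2].
  destruct (lub_facts _ D (ex_intro _ _ (ex_intro _ b0 (conj Hb0 eq_refl))) HB) as [[M0 M1] M2].
  split.
  - split. eapply Rle_trans; [|apply Rmax_l]; auto. apply Rmax_lub; auto.
  - intros a Ha. eapply Rle_trans; [|apply Rmax_l]. apply L2. exists a; auto.
Qed.

Lemma hausdorff_self (A : pt -> Prop) a0 : A a0 -> hausdorff A A = 0.
Proof.
  intros Ha0. unfold hausdorff.
  assert (HA : forall x, (fun r => exists a, A a /\ r = dist_pt_set a A) x -> 0 <= x <= 0).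
  { intros x [a [Ha ->]]. rewrite dist_self; auto; lra. }
  destruct (lub_facts _ 0 (ex_intro _ _ (ex_intro _ a0 (conj Ha0 eq_refl))) HA) as [[L0 L1] L2].
  assert (real (Lub_Rbar (fun r => exists a, A a /\ r = dist_pt_set a A)) = 0) by lra.
  rewrite H. apply Rmax_left. lra.
Qed.

Definition ArcSet k n : pt -> Prop := fun q => exists t, 0 <= t <= 1 /\ q = Arc k n t.
Definition HA k n n' := hausdorff (ArcSet k n) (ArcSet k n').

Lemma Pbound k : (3 <= k)%nat -> exists M, 0 <= M /\ forall x, r0 k <= x <= r1 k -> Pk k x <= M.
Proof.
  intros hk. pose proof (r0_eq k). pose proof (r1_ge1 k hk).
  destruct (continuity_ab_maj (Pk k) (r0 k) (r1 k)) as [Mx [H1 H2]]. lra.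
  intros; apply Pk_cont.
  exists (Pk k Mx). split. apply Pk_nonneg; auto. auto.
Qed.

Lemma arc_point_bound k M n t : (3 <= k)%nat -> (n <= 2 * k - 3)%nat -> 0 <= t <= 1 ->
  (forall x, r0 k <= x <= r1 k -> Pk k x <= M) ->
  Rabs (fst (Arc k n t)) <= r1 k /\ Rabs (snd (Arc k n t)) <= M.
Proof.
  intros hk hn Ht HM. pose proof (Arc_x_range k n t hk hn Ht) as Hx. pose proof (r0_eq k).
  destruct (Arc_form k n t) as [s [c E]]. rewrite E in *. simpl in *.
  split. apply Rabs_le; lra.
  pose proof (Pk_nonneg k _ Hx). pose proof (HM _ Hx).
  destruct s; simpl in *.
  - rewrite Rmult_1_l, Rabs_right; lra.
  - replace (-1 * Pk k (c + -1 * t)) with (- Pk k (c + -1 * t)) by ring.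
    rewrite Rabs_Ropp, Rabs_right; lra.
Qed.

Lemma arc_bound k : (3 <= k)%nat -> exists D, 0 <= D /\ forall n n' q q', (n <= 2 * k - 3)%nat -> (n' <= 2 * k - 3)%nat ->
  ArcSet k n q -> ArcSet k n' q' -> edist q q' <= D.
Proof.
  intros hk. destruct (Pbound k hk) as [M [HM0 HM]]. pose proof (r1_ge1 k hk).
  exists (2 * r1 k + 2 * M). split. lra.
  intros n n' q q' hn hn' [t [Ht ->]] [t' [Ht' ->]].
  destruct (arc_point_bound k M n t hk hn Ht HM). destruct (arc_point_bound k M n' t' hk hn' Ht' HM).
  eapply Rle_trans. apply edist_le.
  pose proof (Rabs_triang (fst (Arc k n t)) (- fst (Arc k n' t'))).
  pose proof (Rabs_triang (snd (Arc k n t)) (- snd (Arc k n' t'))).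
  rewrite Rabs_Ropp in *. unfold Rminus. lra.
Qed.

Lemma ArcSet_ne k n : ArcSet k n (Arc k n 0).
Proof. exists 0; split; auto; lra. Qed.

Lemma HA_self k n : HA k n n = 0.
Proof. apply (hausdorff_self _ _ (ArcSet_ne k n)). Qed.

Lemma HA_bound k D : (3 <= k)%nat ->
  (forall n n' q q', (n <= 2 * k - 3)%nat -> (n' <= 2 * k - 3)%nat -> ArcSet k n q -> ArcSet k n' q' -> edist q q' <= D) ->
  forall n n', (n <= 2 * k - 3)%nat -> (n' <= 2 * k - 3)%nat -> 0 <= HA k n n' <= D.
Proof.
  intros hk HD n n' hn hn'.
  destruct (hausdorff_facts (ArcSet k n) (ArcSet k n') _ _ D (ArcSet_ne k n) (ArcSet_ne k n')) as [H _].
  intros; apply HD with n n'; auto. auto.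
Qed.

Lemma cont_edist_Mform k m s c t : continuity_pt (fun t => edist m (Mform k s c t)) t.
Proof.
  unfold edist, Mform; simpl.
  apply (continuity_pt_comp (fun t => (fst m - (c + sg s * t)) ^ 2 + (snd m - sg s * Pk k (c + sg s * t)) ^ 2) sqrt).
  - apply continuity_pt_filterlim.
    apply (ex_derive_continuous (fun t => (fst m - (c + sg s * t)) ^ 2 + (snd m - sg s * Pk k (c + sg s * t)) ^ 2)).
    auto_derive. apply (Pk_ex_derive k).
  - apply continuity_pt_sqrt. apply Rplus_le_le_0_compat; apply pow2_ge_0.
Qed.

Lemma min_dist_half k m s c a b : a <= b ->
  (forall t, a <= t <= b -> m <> Mform k s c t) ->
  exists d, 0 < d /\ forall t, a <= t <= b -> d <= edist m (Mform k s c t).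
Proof.
  intros Hab Hne.
  destruct (continuity_ab_min (fun t => edist m (Mform k s c t)) a b Hab) as [tm [H1 H2]].
  intros; apply cont_edist_Mform.
  exists (edist m (Mform k s c tm)). split. apply edist_pos. apply Hne; auto. auto.
Qed.

Lemma arc_mid_far k n n' : (3 <= k)%nat -> (n <= 2 * k - 3)%nat -> (n' <= 2 * k - 3)%nat -> n <> n' ->
  exists d, 0 < d /\ forall t, 0 <= t <= 1 -> d <= edist (Arc k n (/2)) (Arc k n' t).
Proof.
  intros hk hn hn' Hnn.
  set (m := Arc k n (/2)).
  assert (Hm : InArc k n m) by (apply Arc_in; auto; lra).
  assert (Ne : forall t, 0 <= t <= 1 -> m <> Arc k n' t).
  { intros t Ht E.
    destruct (Req_dec t 0) as [->|n0]. rewrite Arc_0 in E by auto.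
    apply (InArc_not_tang k n m hk Hm). exists (arc_start k n'). split; auto. apply (start_end_range k n' hk hn').
    destruct (Req_dec t 1) as [->|n1]. rewrite Arc_1 in E by auto.
    apply (InArc_not_tang k n m hk Hm). exists (arc_end k n'). split; auto. apply (start_end_range k n' hk hn').
    apply Hnn. apply (InArc_unique k n n' m hk Hm). rewrite E. apply Arc_in; auto; lra. }
  destruct (min_dist_half k m (fst (h1 k n')) (snd (h1 k n')) 0 (/2)) as [d1 [Hd1 P1]]. lra.
  { intros t Ht. rewrite <- Arc_lo by lra. apply Ne; lra. }
  destruct (min_dist_half k m (fst (h2 k n')) (snd (h2 k n')) (/2) 1) as [d2 [Hd2 P2]]. lra.
  { intros t Ht. rewrite <- Arc_hi by (auto; lra). apply Ne; lra. }
  exists (Rmin d1 d2). split. apply Rmin_pos; auto.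
  intros t Ht. destruct (Rle_dec t (/2)).
  - rewrite Arc_lo by auto. eapply Rle_trans. apply Rmin_l. apply P1; lra.
  - rewrite Arc_hi by (auto; lra). eapply Rle_trans. apply Rmin_r. apply P2; lra.
Qed.

Lemma HA_pos k D n n' : (3 <= k)%nat ->
  (forall n n' q q', (n <= 2 * k - 3)%nat -> (n' <= 2 * k - 3)%nat -> ArcSet k n q -> ArcSet k n' q' -> edist q q' <= D) ->
  (n <= 2 * k - 3)%nat -> (n' <= 2 * k - 3)%nat -> n <> n' -> 0 < HA k n n'.
Proof.
  intros hk HD hn hn' Hnn.
  destruct (arc_mid_far k n n' hk hn hn' Hnn) as [d [Hd Pd]].
  destruct (hausdorff_facts (ArcSet k n) (ArcSet k n') _ _ D (ArcSet_ne k n) (ArcSet_ne k n')) as [_ H].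
  intros; apply HD with n n'; auto.
  assert (Am : ArcSet k n (Arc k n (/2))) by (exists (/2); split; auto; lra).
  specialize (H _ Am).
  destruct (dist_facts (Arc k n (/2)) (ArcSet k n') _ (ArcSet_ne k n')) as [_ [_ G]].
  assert (d <= dist_pt_set (Arc k n (/2)) (ArcSet k n')).
  { apply G. intros b [t [Ht ->]]. apply Pd; auto. }
  unfold HA. lra.
Qed.

Lemma finite_min1 (f : nat -> R) M : (forall n, (n <= M)%nat -> 0 < f n) ->
  exists c, 0 < c /\ forall n, (n <= M)%nat -> c <= f n.
Proof.
  induction M; intros H.
  - exists (f 0%nat). split. apply H; lia. intros n Hn. replace n with 0%nat by lia. lra.
  - destruct IHM as [c [Hc Hf]]. intros; apply H; lia.
    exists (Rmin c (f (S M))). split. apply Rmin_pos; auto; apply H; lia.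
    intros n Hn. destruct (Nat.eq_dec n (S M)). subst. apply Rmin_r.
    eapply Rle_trans. apply Rmin_l. apply Hf; lia.
Qed.

Lemma finite_min2 (f : nat -> nat -> R) M : (forall n n', (n <= M)%nat -> (n' <= M)%nat -> 0 < f n n') ->
  exists c, 0 < c /\ forall n n', (n <= M)%nat -> (n' <= M)%nat -> c <= f n n'.
Proof.
  intros H.
  assert (G : forall M1, (M1 <= M)%nat -> exists c, 0 < c /\ forall n n', (n <= M1)%nat -> (n' <= M)%nat -> c <= f n n').
  { induction M1; intros HM1.
    - destruct (finite_min1 (f 0%nat) M) as [c [Hc Hf]]. intros; apply H; lia.
      exists c. split; auto. intros n n' Hn Hn'. replace n with 0%nat by lia. auto.
    - destruct IHM1 as [c1 [Hc1 Hf1]]. lia.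
      destruct (finite_min1 (f (S M1)) M) as [c2 [Hc2 Hf2]]. intros; apply H; lia.
      exists (Rmin c1 c2). split. apply Rmin_pos; auto.
      intros n n' Hn Hn'. destruct (Nat.eq_dec n (S M1)). subst. eapply Rle_trans. apply Rmin_r. auto.
      eapply Rle_trans. apply Rmin_l. apply Hf1; lia. }
  apply G; auto.
Qed.

Lemma HA_unif k : (3 <= k)%nat -> exists c0 D, 0 < c0 /\ 0 <= D /\
  (forall n n', (n <= 2 * k - 3)%nat -> (n' <= 2 * k - 3)%nat -> 0 <= HA k n n' <= D) /\
  (forall n n', (n <= 2 * k - 3)%nat -> (n' <= 2 * k - 3)%nat -> n <> n' -> c0 <= HA k n n').
Proof.
  intros hk. destruct (arc_bound k hk) as [D [HD0 HD]].
  destruct (finite_min2 (fun n n' => if Nat.eqb n n' then 1 else HA k n n') (2 * k - 3)) as [c [Hc Hf]].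
  { intros n n' Hn Hn'. destruct (Nat.eqb_spec n n'). lra. apply (HA_pos k D); auto. }
  exists c, D. split; auto. split; auto. split.
  - intros; apply (HA_bound k D); auto.
  - intros n n' Hn Hn' Hne. specialize (Hf n n' Hn Hn'). destruct (Nat.eqb_spec n n'); [contradiction|auto].
Qed.

Lemma cont_eps (f : R -> R) x0 e : continuity_pt f x0 -> 0 < e ->
  exists d, 0 < d /\ forall x, Rabs (x - x0) < d -> Rabs (f x - f x0) < e.
Proof.
  intros Hc He. destruct (Hc e He) as [d [Hd P]]. exists d. split; auto.
  intros x Hx. destruct (Req_dec x x0) as [->|ne]. rewrite Rminus_diag, Rabs_R0; auto.
  apply P. split. split. constructor. auto. simpl. unfold R_dist. auto.
Qed.

Lemma local_cover k (I : Type) (U : I -> pt -> Prop) (sgn : R) x0 :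
  (forall i, open2 (U i)) -> (sgn = 1 \/ sgn = -1) ->
  (exists i, U i (x0, sgn * Pk k x0)) ->
  exists d i, 0 < d /\ forall x, Rabs (x - x0) < d -> U i (x, sgn * Pk k x).
Proof.
  intros Uo Hs [i Hi]. destruct (Uo i _ Hi) as [e [He Pe]].
  destruct (cont_eps (Pk k) x0 (e / 2) (Pk_cont k x0) ltac:(lra)) as [d [Hd Pd]].
  exists (Rmin d (e / 2)), i. split. apply Rmin_pos; lra.
  intros x Hx. apply Pe.
  pose proof (Rmin_l d (e/2)). pose proof (Rmin_r d (e/2)).
  eapply Rle_lt_trans. apply edist_le. simpl.
  specialize (Pd x ltac:(lra)).
  rewrite <- Rabs_Ropp. replace (- (x0 - x)) with (x - x0) by ring.
  replace (sgn * Pk k x0 - sgn * Pk k x) with (- sgn * (Pk k x - Pk k x0)) by ring.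
  rewrite Rabs_mult. replace (Rabs (- sgn)) with 1 by (destruct Hs as [->| ->]; unfold Rabs; destruct Rcase_abs; lra).
  lra.
Qed.

Theorem compact_Lambda k : (3 <= k)%nat -> compact2 (Lambda k).
Proof.
  intros hk I U Uo Cov.
  pose proof (r0_eq k). pose proof (r1_ge1 k hk).
  assert (Loc : forall x0, r0 k <= x0 <= r1 k -> exists d i1 i2, 0 < d /\ forall x, Rabs (x - x0) < d ->
             U i1 (x, Pk k x) /\ U i2 (x, - Pk k x)).
  { intros x0 Hx0.
    destruct (local_cover k I U 1 x0 Uo (or_introl eq_refl)) as [d1 [i1 [Hd1 P1]]].
    { apply Cov. split; auto. left; simpl; ring. }
    destruct (local_cover k I U (-1) x0 Uo (or_intror eq_refl)) as [d2 [i2 [Hd2 P2]]].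
    { apply Cov. split; auto. right; simpl; ring. }
    exists (Rmin d1 d2), i1, i2. split. apply Rmin_pos; auto.
    intros x Hx. pose proof (Rmin_l d1 d2). pose proof (Rmin_r d1 d2).
    split.
    - replace (Pk k x) with (1 * Pk k x) by ring. apply P1; lra.
    - replace (- Pk k x) with (-1 * Pk k x) by ring. apply P2; lra. }
  set (S := fun c => r0 k <= c <= r1 k /\ exists l : list I, forall x, r0 k <= x <= c ->
             (exists i, In i l /\ U i (x, Pk k x)) /\ (exists i, In i l /\ U i (x, - Pk k x))).
  assert (Sb : bound S) by (exists (r1 k); intros c [Hc _]; lra).
  assert (S0 : S (r0 k)).
  { split. lra. destruct (Loc (r0 k) ltac:(lra)) as [d [i1 [i2 [Hd P]]]].
    exists (i1 :: i2 :: nil). intros x Hx. assert (x = r0 k) by lra. subst x.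
    destruct (P (r0 k)) as [A1 A2]. rewrite Rminus_diag, Rabs_R0; auto.
    split; [exists i1|exists i2]; simpl; auto. }
  destruct (completeness S Sb (ex_intro _ _ S0)) as [m Hm].
  assert (Hm0 : r0 k <= m) by (apply (proj1 Hm); auto).
  assert (Hm1 : m <= r1 k) by (apply (proj2 Hm); intros c [Hc _]; lra).
  destruct (Loc m ltac:(lra)) as [d [i1 [i2 [Hd P]]]].
  destruct (exists_above S m (m - d) Hm ltac:(lra)) as [c [[Hc [l Hl]] Hcm]].
  set (c' := Rmin (m + d / 2) (r1 k)).
  assert (Sc' : S c').
  { unfold c'. pose proof (Rmin_l (m + d/2) (r1 k)). pose proof (Rmin_r (m + d/2) (r1 k)).
    split. split; [apply Rmin_glb; lra|auto].
    exists (i1 :: i2 :: l). intros x Hx.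
    assert (c <= m) by (apply (proj1 Hm); split; [auto|exists l; auto]).
    destruct (Rle_or_lt x c).
    - destruct (Hl x ltac:(lra)) as [[j1 [J1 K1]] [j2 [J2 K2]]].
      split; [exists j1|exists j2]; simpl; auto.
    - destruct (P x) as [A1 A2]. apply Rabs_def1; lra.
      split; [exists i1|exists i2]; simpl; auto. }
  assert (c' <= m) by (apply (proj1 Hm); auto).
  assert (c' = r1 k).
  { unfold c' in *. destruct (Rle_dec (m + d / 2) (r1 k)).
    rewrite Rmin_left in H1 by auto. lra. rewrite Rmin_right by lra. auto. }
  rewrite H2 in Sc'. destruct Sc' as [_ [l' Hl']].
  exists l'. intros p [Hx [Hy|Hy]]; destruct p as [x y]; simpl in *; subst y;
    destruct (Hl' x Hx) as [A B]; auto.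
Qed.

Lemma INR_diff_ge1 a b : a <> b -> 1 <= Rabs (INR a - INR b).
Proof.
  intros H. destruct (Nat.lt_total a b) as [c|[c|c]]; [|contradiction|].
  - assert (INR (S a) <= INR b) by (apply le_INR; lia). rewrite S_INR in H0.
    rewrite Rabs_left1 by lra. lra.
  - assert (INR (S b) <= INR a) by (apply le_INR; lia). rewrite S_INR in H0.
    rewrite Rabs_right by lra. lra.
Qed.

Lemma INR_diff_le a b M : (a <= M)%nat -> (b <= M)%nat -> Rabs (INR a - INR b) <= INR M.
Proof.
  intros Ha Hb. apply le_INR in Ha. apply le_INR in Hb. pose proof (pos_INR a). pose proof (pos_INR b).
  apply Rabs_le. lra.
Qed.

Lemma dshift_terms k a b : (forall j, (a j <= 2 * k - 3)%nat) -> (forall j, (b j <= 2 * k - 3)%nat) ->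
  forall i, 0 <= Rabs (INR (a i) - INR (b i)) / 2 ^ Z.abs_nat i <= INR (2 * k - 3) * (/2) ^ Z.abs_nat i.
Proof.
  intros Ha Hb i. unfold Rdiv. rewrite <- pow_inv. pose proof (half_pow_pos (Z.abs_nat i)).
  split. apply Rmult_le_pos; [apply Rabs_pos|lra].
  apply Rmult_le_compat_r; [lra|]. apply INR_diff_le; auto.
Qed.

Lemma dshift_agree k a b N : (forall j, (a j <= 2 * k - 3)%nat) -> (forall j, (b j <= 2 * k - 3)%nat) ->
  dshift a b < (/2) ^ N -> forall j, (Z.abs_nat j <= N)%nat -> a j = b j.
Proof.
  intros Ha Hb Hd j Hj. destruct (Nat.eq_dec (a j) (b j)) as [|ne]; auto. exfalso.
  pose proof (sumZ_ge _ _ (dshift_terms k a b Ha Hb) j) as G. fold (dshift a b) in G.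
  pose proof (INR_diff_ge1 _ _ ne). unfold Rdiv in G. rewrite <- pow_inv in G.
  pose proof (half_pow_pos (Z.abs_nat j)). pose proof (half_pow_le _ _ Hj).
  assert ((/2) ^ Z.abs_nat j <= Rabs (INR (a j) - INR (b j)) * (/ 2) ^ Z.abs_nat j) by nra.
  lra.
Qed.

Lemma dshift_small k a b N : (forall j, (a j <= 2 * k - 3)%nat) -> (forall j, (b j <= 2 * k - 3)%nat) ->
  (forall j, (Z.abs_nat j <= N)%nat -> a j = b j) -> dshift a b <= 4 * INR (2 * k - 3) * (/2) ^ N.
Proof.
  intros Ha Hb Hag. apply sumZ_tail. apply dshift_terms; auto.
  intros i Hi. rewrite Hag by auto. rewrite Rminus_diag, Rabs_R0. unfold Rdiv; ring.
Qed.

Lemma image_rep k g i : (3 <= k)%nat -> Omega k g ->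
  image_on (rep k g) (IZR i) (IZR i + 1) = ArcSet k (itin k g i).
Proof.
  intros hk HO. apply FunctionalExtensionality.functional_extensionality. intros q.
  apply PropExtensionality.propositional_extensionality. split.
  - intros [t [Ht ->]]. exists (t - IZR i). split. lra.
    rewrite <- rep_struct by (auto; lra). f_equal; ring.
  - intros [t [Ht ->]]. exists (IZR i + t). split. lra. rewrite rep_struct; auto.
Qed.

Lemma rho_eq k g g' : (3 <= k)%nat -> Omega k g -> Omega k g' ->
  rho k g g' = sumZ (fun i => (/2) ^ Z.abs_nat i * HA k (itin k g i) (itin k g' i)).
Proof.
  intros hk H1 H2. unfold rho. f_equal. apply FunctionalExtensionality.functional_extensionality. intros i.
  rewrite !image_rep; auto.
Qed.

Lemma adm_of k g : (3 <= k)%nat -> Omega k g -> Adm k (itin k g).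
Proof. intros hk HO. destruct (Omega_struct k g hk HO) as [_ [_ [A _]]]. auto. Qed.


Theorem theoremA (k : nat) (hk : (3 <= k)%nat) :
  compact2 (Lambda k) /\
  invariant (Xk k) (Yk k) (Lambda k) /\
  (* T1 maps Omega_k to itself and each class has a representative
     through a tangency point at time 0 *)
  (forall g, Omega k g -> Omega k (T1 g)) /\
  (forall g, Omega k g ->
     exists g', Omega k g' /\ equiv_traj k g' g /\ IsTangPt k (g' 0)) /\
  (* topological conjugacy of T1bar on (Omega_k/~, rho_k) with sigma|K *)
  exists (K : (Z -> nat) -> Prop) (h : (R -> pt) -> (Z -> nat)),
    subshift k K /\
    (* h is well defined on the quotient *)
    (forall g1 g2, Omega k g1 -> Omega k g2 -> equiv_traj k g1 g2 -> h g1 = h g2) /\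
    (* h maps into K, injectively on the quotient, onto K *)
    (forall g, Omega k g -> K (h g)) /\
    (forall g1 g2, Omega k g1 -> Omega k g2 -> h g1 = h g2 -> equiv_traj k g1 g2) /\
    (forall a, K a -> exists g, Omega k g /\ h g = a) /\
    (* h continuous *)
    (forall g, Omega k g -> forall e, 0 < e -> exists d, 0 < d /\
       forall g', Omega k g' -> rho k g g' < d -> dshift (h g) (h g') < e) /\
    (* h^{-1} continuous *)
    (forall g, Omega k g -> forall e, 0 < e -> exists d, 0 < d /\
       forall g', Omega k g' -> dshift (h g) (h g') < d -> rho k g g' < e) /\
    (* conjugacy *)
    (forall g, Omega k g -> h (T1 g) = sigma_shift (h g)).
Proof.
  split. apply compact_Lambda; auto.
  split. apply invariance; auto.
  split. intros; apply Omega_T1; auto.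
  split. intros; apply rep_exists; auto.
  destruct (HA_unif k hk) as [c0 [D [Hc0 [HD0 [HAb HAp]]]]].
  assert (HK : INR (2 * k - 3) >= 0) by (apply Rle_ge, pos_INR).
  exists (Adm k), (itin k).
  split; [|split; [|split; [|split; [|split; [|split; [|split]]]]]].
  -
    split; [|split].
    + intros a [Ha _] j. apply Ha.
    + intros a Hs Hcl. split; auto.
      intros j. set (N := Nat.max (Z.abs_nat j) (Z.abs_nat (j + 1))).
      destruct (Hcl ((/2) ^ N) (half_pow_pos N)) as [b [[Hb Hbc] Hd]].
      pose proof (dshift_agree k a b N Hs Hb Hd) as Ag.
      rewrite (Ag j), (Ag (j + 1)%Z) by (unfold N; lia). apply Hbc.
    + intros a [Ha Hc]. split. intros j; apply Ha.
      intros j. unfold sigma_shift. replace (j + 1 + 1)%Z with ((j + 1) + 1)%Z by lia. apply Hc.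
  - intros g1 g2 _ _ E. apply E.
  - intros g HO. apply adm_of; auto.
  - intros g1 g2 _ _ E. apply E.
  - intros a Ha. exists (build k a). apply construct; auto.
  -
    intros g HO e He.
    destruct (small_pow (e / (4 * INR (2 * k - 3) + 1))) as [N HN].
    { apply Rdiv_lt_0_compat; lra. }
    exists (c0 * (/2) ^ N). split. apply Rmult_lt_0_compat; auto; apply half_pow_pos.
    intros g' HO' Hr.
    destruct (adm_of k g hk HO) as [Ha _]. destruct (adm_of k g' hk HO') as [Hb _].
    assert (Ag : forall j, (Z.abs_nat j <= N)%nat -> itin k g j = itin k g' j).
    { intros j Hj. destruct (Nat.eq_dec (itin k g j) (itin k g' j)) as [|ne]; auto. exfalso.
      rewrite rho_eq in Hr by auto.
      assert (Bd : forall i, 0 <= (/2) ^ Z.abs_nat i * HA k (itin k g i) (itin k g' i) <= D * (/2) ^ Z.abs_nat i).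
      { intros i. pose proof (half_pow_pos (Z.abs_nat i)). destruct (HAb (itin k g i) (itin k g' i)); auto.
        split. apply Rmult_le_pos; lra. nra. }
      pose proof (sumZ_ge _ _ Bd j) as G.
      pose proof (HAp _ _ (Ha j) (Hb j) ne). pose proof (half_pow_le _ _ Hj).
      pose proof (half_pow_pos (Z.abs_nat j)). pose proof (half_pow_pos N).
      assert (c0 * (/2) ^ N <= (/2) ^ Z.abs_nat j * HA k (itin k g j) (itin k g' j)) by nra.
      lra. }
    pose proof (dshift_small k _ _ N Ha Hb Ag).
    assert (4 * INR (2 * k - 3) * (/2) ^ N < e).
    { assert ((/2) ^ N * (4 * INR (2 * k - 3) + 1) < e).
      { apply (Rmult_lt_compat_r (4 * INR (2 * k - 3) + 1)) in HN; [|lra].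
        unfold Rdiv in HN. rewrite Rmult_assoc, Rinv_l, Rmult_1_r in HN by lra. auto. }
      pose proof (half_pow_pos N). nra. }
    lra.
  -
    intros g HO e He.
    destruct (small_pow (e / (4 * D + 1))) as [N HN].
    { apply Rdiv_lt_0_compat; lra. }
    exists ((/2) ^ N). split. apply half_pow_pos.
    intros g' HO' Hd.
    destruct (adm_of k g hk HO) as [Ha _]. destruct (adm_of k g' hk HO') as [Hb _].
    pose proof (dshift_agree k _ _ N Ha Hb Hd) as Ag.
    rewrite rho_eq by auto.
    assert (Bd : forall i, 0 <= (/2) ^ Z.abs_nat i * HA k (itin k g i) (itin k g' i) <= D * (/2) ^ Z.abs_nat i).
    { intros i. pose proof (half_pow_pos (Z.abs_nat i)). destruct (HAb (itin k g i) (itin k g' i)); auto.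
      split. apply Rmult_le_pos; lra. nra. }
    pose proof (sumZ_tail _ _ N Bd) as T.
    assert (sumZ (fun i => (/2) ^ Z.abs_nat i * HA k (itin k g i) (itin k g' i)) <= 4 * D * (/2) ^ N).
    { apply T. intros i Hi. rewrite (Ag i Hi), HA_self. ring. }
    assert (4 * D * (/2) ^ N < e).
    { assert ((/2) ^ N * (4 * D + 1) < e).
      { apply (Rmult_lt_compat_r (4 * D + 1)) in HN; [|lra].
        unfold Rdiv in HN. rewrite Rmult_assoc, Rinv_l, Rmult_1_r in HN by lra. auto. }
      pose proof (half_pow_pos N). nra. }
    lra.
  - intros g _. apply itin_T1.
Qed.
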